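(* Let $f$ be such that $f(t)\to0$ as $t\to\infty$ and $f$ is eventually decreasing, and $f\in C^2(0,\infty)$ is convex on $(0,\infty)$ with $f''$ monotone on some interval $(0,\epsilon)$. (a) If moreover $f(0)$ is finite and there exists $\sigma_1\in(0,1)$ with $\lim_{t\to0}t^{\sigma_1}f'(t)=0$, then $\lim_{\omega\to\infty}\omega^{2-\sigma_1}\mathcal F_{\cos}(\omega)=0$ and $\lim_{\omega\to\infty}\omega\mathcal F_{\sin}(\omega)=f(0)$. (b) If moreover $f(0)$ is infinite and there exists $\sigma_2\in(0,1)$ with $\lim_{t\to0}t^{\sigma_2}f(t)\in(0,\infty)$, then $\lim_{\omega\to\infty}\omega^{1-\sigma_2}\mathcal F_{\cos}(\omega)\in(0,\infty)$ and $\lim_{\omega\to\infty}\omega^{1-\sigma_2}\mathcal F_{\sin}(\omega)\in(0,\infty)$.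
   Context: For $\omega\ne0$, $\mathcal F_{\cos}(\omega)=\int_0^\infty f(t)\cos(t\omega)dt$ and $\mathcal F_{\sin}(\omega)=\int_0^\infty f(t)\sin(t\omega)dt$ (improper integrals). Here $f$ is defined on $[0,\infty)$ (extended evenly to $\mathbb{R}$), real-valued on $(0,\infty)$, with $f(0)$ possibly $+\infty$. *)

(* Defs.v *)
From Stdlib Require Import Reals.
From Coquelicot Require Import Coquelicot.
Open Scope R_scope.

Definition is_Fcos (f : R -> R) (w l : R) : Prop :=
  is_RInt_gen (fun t => f t * cos (t * w)) (at_right 0) (Rbar_locally p_infty) l.

Definition is_Fsin (f : R -> R) (w l : R) : Prop :=
  is_RInt_gen (fun t => f t * sin (t * w)) (at_right 0) (Rbar_locally p_infty) l.

Definition C2_pos (f : R -> R) : Prop :=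
  forall t, 0 < t ->
    ex_derive f t /\ ex_derive (Derive f) t /\ continuous (Derive (Derive f)) t.

Definition convex_pos (f : R -> R) : Prop :=
  forall x y th, 0 < x -> 0 < y -> 0 <= th <= 1 ->
    f (th * x + (1 - th) * y) <= th * f x + (1 - th) * f y.

Definition eventually_decreasing (f : R -> R) : Prop :=
  exists M, forall s t, M <= s -> s <= t -> f t <= f s.

Definition monotone_on_0 (g : R -> R) (eps : R) : Prop :=
  (forall s t, 0 < s -> s <= t -> t < eps -> g s <= g t) \/
  (forall s t, 0 < s -> s <= t -> t < eps -> g t <= g s).

(* Main.v *)
Require Import Defs.
From Stdlib Require Import Reals Lra.
From Coquelicot Require Import Coquelicot.
Open Scope R_scope.

Lemma ball_R (x e y : R) : ball x e y <-> Rabs (y - x) < e.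
Proof. split; intro H; exact H. Qed.

Lemma ball0_lt (d y : R) : ball 0 d y -> y < d.
Proof. intro H. change (Rabs (y - 0) < d) in H. rewrite Rminus_0_r in H. pose proof (Rle_abs y). lra. Qed.

Lemma ball0_of (d y : R) : 0 < y < d -> ball 0 d y.
Proof. intro H. change (Rabs (y - 0) < d). rewrite Rminus_0_r, Rabs_pos_eq; lra. Qed.

Lemma gen_to_eps (h : R -> R) (l : R) :
  is_RInt_gen h (at_right 0) (Rbar_locally p_infty) l ->
  forall eps, 0 < eps -> exists d, 0 < d /\ exists M, forall a b, 0 < a < d -> M < b ->
    exists y, is_RInt h a b y /\ Rabs (y - l) < eps.
Proof.
  intros H eps Heps.
  assert (HP : locally l (fun y => Rabs (y - l) < eps)).
  { exists (mkposreal eps Heps). intros y Hy. exact Hy. }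
  specialize (H _ HP). destruct H as [Q R0 HQ HR HQR].
  destruct HQ as [d Hd]. destruct HR as [M HM].
  exists d. split. apply cond_pos. exists M. intros a b Ha Hb.
  apply (HQR a b). apply Hd. apply ball0_of; simpl; lra. lra.
  apply HM. exact Hb.
Qed.

Lemma eps_to_gen (h : R -> R) (l : R) :
  (forall eps, 0 < eps -> exists d, 0 < d /\ exists M, forall a b, 0 < a < d -> M < b ->
    exists y, is_RInt h a b y /\ Rabs (y - l) < eps) ->
  is_RInt_gen h (at_right 0) (Rbar_locally p_infty) l.
Proof.
  intros H P [e He].
  destruct (H e (cond_pos e)) as [d [Hd [M HM]]].
  apply (Filter_prod _ _ _ (fun a => 0 < a < d) (fun b => M < b)).
  - exists (mkposreal d Hd). intros y Hy Hy0. apply ball_R in Hy. simpl in Hy.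
    apply ball0_lt in Hy. simpl in Hy. lra.
  - exists M. auto.
  - intros a b Ha Hb. destruct (HM a b Ha Hb) as [y [Hy1 Hy2]]. exists y. split. exact Hy1.
    apply He. exact Hy2.
Qed.

Lemma gen_exists (h : R -> R) :
  (forall a b, 0 < a -> 0 < b -> ex_RInt h a b) ->
  (forall eps, 0 < eps -> exists d, 0 < d /\ forall a b, 0 < a < d -> 0 < b < d -> Rabs (RInt h a b) < eps) ->
  (forall eps, 0 < eps -> exists M, forall a b, M < a -> M < b -> Rabs (RInt h a b) < eps) ->
  exists l, is_RInt_gen h (at_right 0) (Rbar_locally p_infty) l.
Proof.
  intros Hex H0 Hinf.
  assert (FF : ProperFilter (filter_prod (at_right 0) (Rbar_locally p_infty))).
  { apply filter_prod_proper. }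
  destruct (proj1 (filterlim_locally_cauchy (F := filter_prod (at_right 0) (Rbar_locally p_infty))
      (fun ab : R * R => RInt h (fst ab) (snd ab)))) as [l Hl].
  - intros eps.
    destruct (H0 (eps/2)) as [d [Hd Hd']]. destruct eps; simpl; lra.
    destruct (Hinf (eps/2)) as [M HM]. destruct eps; simpl; lra.
    exists (fun ab : R * R => 0 < fst ab < Rmin d 1 /\ Rmax M 1 < snd ab).
    split.
    + apply (Filter_prod _ _ _ (fun a => 0 < a < Rmin d 1) (fun b => Rmax M 1 < b)).
      * assert (0 < Rmin d 1) by (apply Rmin_pos; lra).
        exists (mkposreal _ H). intros y Hy Hy0. apply ball0_lt in Hy. simpl in Hy. lra.
      * exists (Rmax M 1). auto.
      * intros; simpl; auto.
    + intros [a b] [a' b'] [Ha Hb] [Ha' Hb']; simpl in *. change (Rabs (RInt h (fst (a',b')) (snd (a',b')) - RInt h (fst (a,b)) (snd (a,b))) < eps); simpl.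
      pose proof (Rmin_l d 1). pose proof (Rmin_r d 1).
      pose proof (Rmax_l M 1). pose proof (Rmax_r M 1).
      assert (E : RInt h a' b' - RInt h a b = RInt h a' a + RInt h b b').
      { rewrite <- (RInt_Chasles h a' a b'), <- (RInt_Chasles h a b b').
        unfold plus; simpl; ring. all: apply Hex; lra. }
      rewrite E.
      assert (Rabs (RInt h a' a) < eps/2) by (apply Hd'; lra).
      assert (Rabs (RInt h b b') < eps/2) by (apply HM; lra).
      pose proof (Rabs_triang (RInt h a' a) (RInt h b b')). lra.
  - exists l. apply eps_to_gen. intros eps Heps.
    assert (HP : locally l (fun y => Rabs (y - l) < eps)).
    { exists (mkposreal eps Heps). intros y Hy. exact Hy. }
    destruct (Hl _ HP) as [Q R0 [d Hd] [M HM] HQR].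
    exists (Rmin d 1). split. apply Rmin_pos; [apply cond_pos|lra].
    exists (Rmax M 1). intros a b Ha Hb.
    pose proof (Rmin_l d 1). pose proof (Rmin_r d 1).
    pose proof (Rmax_l M 1). pose proof (Rmax_r M 1).
    exists (RInt h a b). split. apply (@RInt_correct R_CompleteNormedModule h a b). apply Hex; lra.
    apply (HQR a b). apply Hd. apply ball0_of; simpl; lra. lra.
    apply HM. lra.
Qed.

Lemma le_eps (x B : R) : (forall e, 0 < e -> x <= B + e) -> x <= B.
Proof.
  intros H. destruct (Rle_or_lt x B) as [h|h]; auto.
  specialize (H ((x - B)/2)). lra.
Qed.

Lemma gen_bound_abs (h : R -> R) (l X B : R) :
  is_RInt_gen h (at_right 0) (Rbar_locally p_infty) l ->
  (forall e, 0 < e -> exists d, 0 < d /\ exists M, forall a b, 0 < a < d -> M < b ->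
      Rabs (RInt h a b - X) <= B + e) ->
  Rabs (l - X) <= B.
Proof.
  intros Hl H. apply le_eps. intros e He.
  destruct (H (e/2)) as [d [Hd [M HM]]]. lra.
  destruct (gen_to_eps h l Hl (e/2)) as [d1 [Hd1 [M1 HM1]]]. lra.
  set (a := Rmin d d1 / 2). set (b := Rmax M M1 + 1).
  assert (Ha : 0 < a). { unfold a. pose proof (Rmin_pos d d1 Hd Hd1). lra. }
  assert (Ha1 : a < d). { unfold a. pose proof (Rmin_l d d1). pose proof (Rmin_pos d d1 Hd Hd1). lra. }
  assert (Ha2 : a < d1). { unfold a. pose proof (Rmin_r d d1). pose proof (Rmin_pos d d1 Hd Hd1). lra. }
  assert (Hb1 : M < b). { unfold b. pose proof (Rmax_l M M1). lra. }
  assert (Hb2 : M1 < b). { unfold b. pose proof (Rmax_r M M1). lra. }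
  destruct (HM1 a b (conj Ha Ha2) Hb2) as [y [Hy1 Hy2]].
  apply (is_RInt_unique (V:=R_CompleteNormedModule) h a b y) in Hy1.
  specialize (HM a b (conj Ha Ha1) Hb1). rewrite Hy1 in HM.
  replace (l - X) with ((y - X) - (y - l)) by ring.
  pose proof (Rabs_triang (y - X) (- (y - l))). rewrite Rabs_Ropp in H0.
  unfold Rminus at 1. lra.
Qed.

Lemma gen_bound_ge (h : R -> R) (l B : R) :
  is_RInt_gen h (at_right 0) (Rbar_locally p_infty) l ->
  (exists d, 0 < d /\ exists M, forall a b, 0 < a < d -> M < b -> B <= RInt h a b) ->
  B <= l.
Proof.
  intros Hl [d [Hd [M HM]]].
  apply Rnot_lt_le. intro Hlt.
  destruct (gen_to_eps h l Hl (B - l)) as [d1 [Hd1 [M1 HM1]]]. lra.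
  set (a := Rmin d d1 / 2). set (b := Rmax M M1 + 1).
  assert (Ha : 0 < a). { unfold a. pose proof (Rmin_pos d d1 Hd Hd1). lra. }
  assert (Ha1 : a < d). { unfold a. pose proof (Rmin_l d d1). pose proof (Rmin_pos d d1 Hd Hd1). lra. }
  assert (Ha2 : a < d1). { unfold a. pose proof (Rmin_r d d1). pose proof (Rmin_pos d d1 Hd Hd1). lra. }
  assert (Hb1 : M < b). { unfold b. pose proof (Rmax_l M M1). lra. }
  assert (Hb2 : M1 < b). { unfold b. pose proof (Rmax_r M M1). lra. }
  destruct (HM1 a b (conj Ha Ha2) Hb2) as [y [Hy1 Hy2]].
  apply (is_RInt_unique (V:=R_CompleteNormedModule) h a b y) in Hy1.
  specialize (HM a b (conj Ha Ha1) Hb1). rewrite Hy1 in HM.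
  pose proof (Rle_abs (y - l)). lra.
Qed.

Lemma exR (f : R -> R) a b : (forall z, Rmin a b <= z <= Rmax a b -> continuous f z) -> ex_RInt f a b.
Proof. apply (ex_RInt_continuous (V:=R_CompleteNormedModule)). Qed.
Lemma contD (f : R -> R) x l : is_derive f x l -> continuous f x.
Proof. intro H. apply (ex_derive_continuous (K:=R_AbsRing) (V:=R_NormedModule) f). exists l; exact H. Qed.
Lemma RIntU (f : R -> R) a b l : is_RInt f a b l -> RInt f a b = l.
Proof. apply (is_RInt_unique (V:=R_CompleteNormedModule)). Qed.
Lemma IRD (f df : R -> R) a b :
  (forall x, Rmin a b <= x <= Rmax a b -> is_derive f x (df x)) ->
  (forall x, Rmin a b <= x <= Rmax a b -> continuous df x) -> is_RInt df a b (f b - f a).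
Proof. apply (is_RInt_derive (V:=R_CompleteNormedModule)). Qed.
Lemma cmul (f g : R -> R) x : continuous f x -> continuous g x -> continuous (fun y => f y * g y) x.
Proof. apply (continuous_mult f g). Qed.
Lemma cplus (f g : R -> R) x : continuous f x -> continuous g x -> continuous (fun y => f y + g y) x.
Proof. apply (continuous_plus (V:=R_NormedModule) f g). Qed.
Lemma RIntP (f g : R -> R) a b : ex_RInt f a b -> ex_RInt g a b -> RInt (fun x => f x + g x) a b = RInt f a b + RInt g a b.
Proof. apply (RInt_plus (V:=R_CompleteNormedModule)). Qed.
Lemma RIntS (f : R -> R) a b c : ex_RInt f a b -> RInt (fun x => c * f x) a b = c * RInt f a b.
Proof. apply (RInt_scal (V:=R_CompleteNormedModule)). Qed.
Lemma exS (f : R -> R) a b c : ex_RInt f a b -> ex_RInt (fun x => c * f x) a b.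
Proof. apply (ex_RInt_scal (V:=R_NormedModule)). Qed.

Lemma incr_of_deriv (phi dphi : R -> R) (lo hi : R) :
  (forall t, lo < t < hi -> is_derive phi t (dphi t)) ->
  (forall t, lo < t < hi -> 0 <= dphi t) ->
  forall x y, lo < x -> x <= y -> y < hi -> phi x <= phi y.
Proof.
  intros Hd Hp x y Hx Hxy Hy.
  destruct Hxy as [Hxy|Hxy]; [|subst; lra].
  destruct (MVT_cor2 phi dphi x y Hxy) as [c [Hc1 Hc2]].
  - intros c Hc. apply is_derive_Reals. apply Hd. lra.
  - assert (0 <= dphi c) by (apply Hp; lra).
    assert (0 <= dphi c * (y - x)) by (apply Rmult_le_pos; lra). lra.
Qed.

Lemma ibp_bound (g dg S s : R -> R) (x y m M : R) :
  x <= y ->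
  (forall t, x <= t <= y -> is_derive g t (dg t) /\ is_derive S t (s t) /\
     continuous dg t /\ continuous s t /\ dg t <= 0 /\ m <= S t <= M) ->
  ex_RInt (fun t => g t * s t) x y /\
  g y * S y - g x * S x + (g x - g y) * m <= RInt (fun t => g t * s t) x y <=
  g y * S y - g x * S x + (g x - g y) * M.
Proof.
  intros Hxy H.
  assert (Hmm : forall t, Rmin x y <= t <= Rmax x y -> x <= t <= y).
  { intros t. rewrite Rmin_left, Rmax_right; auto. }
  assert (Hcg : forall t, x <= t <= y -> continuous g t).
  { intros t Ht. apply (contD g t (dg t)). apply H; auto. }
  assert (HcS : forall t, x <= t <= y -> continuous S t).
  { intros t Ht. apply (contD S t (s t)). apply H; auto. }
  assert (E1 : ex_RInt (fun t => g t * s t) x y).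
  { apply exR. intros t Ht. apply Hmm in Ht.
    apply (cmul g s). apply Hcg; auto. apply H; auto. }
  assert (E2 : ex_RInt (fun t => dg t * S t) x y).
  { apply exR. intros t Ht. apply Hmm in Ht.
    apply (cmul dg S). apply H; auto. apply HcS; auto. }
  assert (I1 : is_RInt (fun t => dg t * S t + g t * s t) x y (g y * S y - g x * S x)).
  { apply (IRD (fun t => g t * S t)).
    - intros t Ht. apply Hmm in Ht. destruct (H t Ht) as [A [B _]].
      apply (is_derive_mult g S t (dg t) (s t) A B). intros; apply Rmult_comm.
    - intros t Ht. apply Hmm in Ht.
      apply (cplus (fun t => dg t * S t) (fun t => g t * s t)).
      apply (cmul dg S). apply H; auto. apply HcS; auto.
      apply (cmul g s). apply Hcg; auto. apply H; auto. }
  assert (I2 : is_RInt dg x y (g y - g x)).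
  { apply (IRD g).
    - intros t Ht. apply Hmm in Ht. apply H; auto.
    - intros t Ht. apply Hmm in Ht. apply H; auto. }
  apply RIntU in I1. apply RIntU in I2.
  rewrite (RIntP (fun t => dg t * S t) (fun t => g t * s t)) in I1; auto.
  assert (Ed : ex_RInt dg x y).
  { apply exR. intros t Ht. apply Hmm in Ht. apply H; auto. }
  assert (Lo : RInt (fun t => dg t * M) x y <= RInt (fun t => dg t * S t) x y).
  { apply RInt_le; auto.
    apply (ex_RInt_ext (fun t => M * dg t)); intros; try apply Rmult_comm; apply exS; auto.
    intros t Ht. destruct (H t ltac:(lra)) as [_ [_ [_ [_ [A B]]]]]. nra. }
  assert (Hi : RInt (fun t => dg t * S t) x y <= RInt (fun t => dg t * m) x y).
  { apply RInt_le; auto.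
    apply (ex_RInt_ext (fun t => m * dg t)); intros; try apply Rmult_comm; apply exS; auto.
    intros t Ht. destruct (H t ltac:(lra)) as [_ [_ [_ [_ [A B]]]]]. nra. }
  assert (EM : forall c, RInt (fun t => dg t * c) x y = c * (g y - g x)).
  { intro c. rewrite (RInt_ext _ (fun t => c * dg t)).
    rewrite RIntS; auto. rewrite I2. reflexivity.
    intros; apply Rmult_comm. }
  rewrite EM in Lo, Hi.   split; auto. split; nra.
Qed.

Lemma lim_inf_eps (g : R -> R) (L : R) :
  filterlim g (Rbar_locally p_infty) (locally L) ->
  forall e, 0 < e -> exists M, forall t, M < t -> Rabs (g t - L) < e.
Proof.
  intros H e He.
  assert (HP : locally L (fun y => Rabs (y - L) < e)).
  { exists (mkposreal e He). intros y Hy. exact Hy. }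
  destruct (H _ HP) as [M HM]. exists M. exact HM.
Qed.

Lemma eps_lim_inf (g : R -> R) (L : R) :
  (forall e, 0 < e -> exists M, forall t, M < t -> Rabs (g t - L) < e) ->
  filterlim g (Rbar_locally p_infty) (locally L).
Proof.
  intros H P [e He].
  destruct (H e (cond_pos e)) as [M HM]. exists M. intros t Ht. apply He. apply HM. exact Ht.
Qed.

Lemma lim_0_eps (g : R -> R) (L : R) :
  filterlim g (at_right 0) (locally L) ->
  forall e, 0 < e -> exists d, 0 < d /\ forall t, 0 < t < d -> Rabs (g t - L) < e.
Proof.
  intros H e He.
  assert (HP : locally L (fun y => Rabs (y - L) < e)).
  { exists (mkposreal e He). intros y Hy. exact Hy. }
  destruct (H _ HP) as [d Hd]. exists d. split. apply cond_pos.
  intros t Ht. apply Hd. apply ball0_of. lra. lra.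
Qed.

Lemma cont_eps (g : R -> R) (x : R) :
  continuous g x -> forall e, 0 < e -> exists r, 0 < r /\ forall t, Rabs (t - x) < r -> Rabs (g t - g x) < e.
Proof.
  intros H e He.
  assert (HP : locally (g x) (fun y => Rabs (y - g x) < e)).
  { exists (mkposreal e He). intros y Hy. exact Hy. }
  destruct (H _ HP) as [r Hr]. exists r. split. apply cond_pos.
  intros t Ht. apply Hr. exact Ht.
Qed.

Section FProps.
Variable f : R -> R.
Hypothesis Hinf : filterlim f (Rbar_locally p_infty) (locally 0).
Hypothesis HC2 : C2_pos f.
Hypothesis Hconv : convex_pos f.

Lemma f_isd t : 0 < t -> is_derive f t (Derive f t).
Proof. intro Ht. apply Derive_correct. apply HC2; auto. Qed.
Lemma f_isd2 t : 0 < t -> is_derive (Derive f) t (Derive (Derive f) t).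
Proof. intro Ht. apply Derive_correct. apply HC2; auto. Qed.
Lemma f_cont2 t : 0 < t -> continuous (Derive (Derive f)) t.
Proof. intro Ht. apply HC2; auto. Qed.
Lemma f_cont1 t : 0 < t -> continuous (Derive f) t.
Proof. intro Ht. apply (contD _ _ _ (f_isd2 t Ht)). Qed.
Lemma f_cont t : 0 < t -> continuous f t.
Proof. intro Ht. apply (contD _ _ _ (f_isd t Ht)). Qed.

Lemma f2_nonneg t : 0 < t -> 0 <= Derive (Derive f) t.
Proof.
  intros Ht. apply Rnot_lt_le. intro Hn.
  destruct (cont_eps _ _ (f_cont2 t Ht) (- Derive (Derive f) t / 2)) as [r [Hr Hr']]. lra.
  set (q := Rmin r t / 2).
  assert (Hq : 0 < q) by (unfold q; pose proof (Rmin_pos r t Hr Ht); lra).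
  assert (Hqr : q < r) by (unfold q; pose proof (Rmin_l r t); lra).
  assert (Hqt : q < t) by (unfold q; pose proof (Rmin_r r t); lra).
  destruct (MVT_cor2 f (Derive f) (t - q) t) as [c1 [E1 Hc1]]. lra.
  { intros c Hc. apply is_derive_Reals. apply f_isd. lra. }
  destruct (MVT_cor2 f (Derive f) t (t + q)) as [c2 [E2 Hc2]]. lra.
  { intros c Hc. apply is_derive_Reals. apply f_isd. lra. }
  destruct (MVT_cor2 (Derive f) (Derive (Derive f)) c1 c2) as [c3 [E3 Hc3]]. lra.
  { intros c Hc. apply is_derive_Reals. apply f_isd2. lra. }
  assert (H3 : Derive (Derive f) c3 < 0).
  { assert (Rabs (c3 - t) < r) by (apply Rabs_def1; lra).
    specialize (Hr' c3 H). apply Rabs_def2 in Hr'. lra. }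
  assert (Derive f c2 < Derive f c1).
  { assert (Derive (Derive f) c3 * (c2 - c1) < 0) by nra. lra. }
  pose proof (Hconv (t - q) (t + q) (1/2) ltac:(lra) ltac:(lra) ltac:(lra)).
  replace (1 / 2 * (t - q) + (1 - 1 / 2) * (t + q)) with t in H0 by field.
  nra.
Qed.

Lemma f1_incr x y : 0 < x -> x <= y -> Derive f x <= Derive f y.
Proof.
  intros Hx Hxy.
  apply (incr_of_deriv (Derive f) (Derive (Derive f)) 0 (y+1)); try lra.
  intros; apply f_isd2; lra. intros; apply f2_nonneg; lra.
Qed.

Lemma f1_nonpos x : 0 < x -> Derive f x <= 0.
Proof.
  intros Hx. apply Rnot_lt_le. intro Hd.
  destruct (lim_inf_eps f 0 Hinf 1 ltac:(lra)) as [M HM].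
  set (k := (Rabs (f x) + 1) / Derive f x).
  assert (Hk : k * Derive f x = Rabs (f x) + 1) by (unfold k; field; lra).
  assert (Hk0 : 0 < k) by (unfold k; apply Rdiv_lt_0_compat; [pose proof (Rabs_pos (f x)); lra | lra]).
  set (t := Rmax M x + k + 1).
  assert (Ht1 : M < t) by (unfold t; pose proof (Rmax_l M x); lra).
  assert (Ht2 : x + k < t) by (unfold t; pose proof (Rmax_r M x); lra).
  destruct (MVT_cor2 f (Derive f) x t) as [c [E Hc]]. lra.
  { intros c Hc. apply is_derive_Reals. apply f_isd. lra. }
  assert (Derive f x <= Derive f c) by (apply f1_incr; lra).
  assert (Derive f x * k <= Derive f c * (t - x)) by nra.
  specialize (HM t Ht1). rewrite Rminus_0_r in HM. apply Rabs_def2 in HM.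
  pose proof (Rle_abs (f x)). pose proof (Rabs_Ropp (f x)). pose proof (Rle_abs (- f x)). lra.
Qed.

Lemma f_decr x y : 0 < x -> x <= y -> f y <= f x.
Proof.
  intros Hx Hxy.
  cut (- f x <= - f y). lra.
  apply (incr_of_deriv (fun t => - f t) (fun t => - Derive f t) 0 (y+1)); try lra.
  intros t Ht. apply (is_derive_opp f t (Derive f t)). apply f_isd; lra.
  intros t Ht. pose proof (f1_nonpos t ltac:(lra)). lra.
Qed.

Lemma f_nonneg x : 0 < x -> 0 <= f x.
Proof.
  intros Hx. apply Rnot_lt_le. intro Hn.
  destruct (lim_inf_eps f 0 Hinf (- f x) ltac:(lra)) as [M HM].
  set (t := Rmax M x + 1).
  assert (Ht1 : M < t) by (unfold t; pose proof (Rmax_l M x); lra).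
  assert (Ht2 : x < t) by (unfold t; pose proof (Rmax_r M x); lra).
  specialize (HM t Ht1). rewrite Rminus_0_r in HM. apply Rabs_def2 in HM.
  pose proof (f_decr x t Hx ltac:(lra)). lra.
Qed.
End FProps.

Lemma rp_pos x y : 0 < Rpower x y.
Proof. unfold Rpower. apply exp_pos. Qed.

Lemma rp_deriv x y : 0 < x -> is_derive (fun t => Rpower t y) x (y * Rpower x (y - 1)).
Proof. intro H. apply is_derive_Reals. apply derivable_pt_lim_power; auto. Qed.

Lemma rp_cont x y : 0 < x -> continuous (fun t => Rpower t y) x.
Proof. intro H. apply (contD _ _ _ (rp_deriv x y H)). Qed.

Lemma rp_one y : Rpower 1 y = 1.
Proof. unfold Rpower. rewrite ln_1, Rmult_0_r. apply exp_0. Qed.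

Lemma rp_small c : 0 < c -> forall eta, 0 < eta -> exists d, 0 < d /\ forall t, 0 < t < d -> Rpower t c < eta.
Proof.
  intros Hc eta He. exists (Rpower eta (/ c)). split. apply rp_pos.
  intros t Ht. replace eta with (Rpower (Rpower eta (/c)) c).
  apply Rlt_Rpower_l; auto.
  rewrite Rpower_mult. replace (/ c * c) with 1 by (field; lra). apply Rpower_1; auto.
Qed.

Lemma rp_decr c a b : 0 <= c -> 0 < a <= b -> Rpower b (- c) <= Rpower a (- c).
Proof.
  intros Hc Hab. rewrite !Rpower_Ropp. apply Rinv_le_contravar. apply rp_pos.
  apply Rle_Rpower_l; auto.
Qed.

Lemma rp_big_small c : 0 < c -> forall eta, 0 < eta -> exists M, forall t, M < t -> Rpower t (- c) < eta.
Proof.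
  intros Hc eta He. exists (Rpower (/ eta) (/ c)). intros t Ht.
  pose proof (rp_pos (/eta) (/c)).
  rewrite Rpower_Ropp.
  assert (/ eta < Rpower t c).
  { replace (/ eta) with (Rpower (Rpower (/ eta) (/c)) c).
    apply Rlt_Rpower_l. exact Hc. split; [exact H|exact Ht].
    rewrite Rpower_mult. replace (/ c * c) with 1 by (field; lra). apply Rpower_1.
    apply Rinv_0_lt_compat; auto. }
  replace eta with (/ / eta) by (field; lra).
  apply Rinv_lt_contravar; auto. apply Rmult_lt_0_compat. apply Rinv_0_lt_compat; auto. apply rp_pos.
Qed.

Lemma rp_ge1 c t : 0 <= c -> 0 < t <= 1 -> 1 <= Rpower t (- c).
Proof. intros Hc Ht. rewrite <- (rp_one (- c)). apply rp_decr; auto. Qed.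

Definition osc (s S U : R -> R) : Prop :=
  (forall x, is_derive S x (s x)) /\ (forall x, is_derive U x (S x)) /\
  (forall x, continuous s x) /\ (forall x, Rabs (s x) <= 1) /\
  (forall x, Rabs (S x) <= 1) /\ (forall x, Rabs (U x) <= 1).

Lemma osc_cos : osc cos sin (fun x => - cos x).
Proof.
  unfold osc. split; [|split;[|split;[|split;[|split]]]]; intro x.
  -  apply is_derive_Reals. apply derivable_pt_lim_sin.
  - apply (is_derive_ext (fun x => - cos x)). reflexivity.
    apply is_derive_Reals. replace (sin x) with (- - sin x) by ring.
    apply derivable_pt_lim_opp. apply derivable_pt_lim_cos.
  - apply (contD cos x (- sin x)). apply is_derive_Reals. apply derivable_pt_lim_cos.
  - apply Rabs_le. apply COS_bound.
  - apply Rabs_le. apply SIN_bound.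
  - rewrite Rabs_Ropp. apply Rabs_le. apply COS_bound.
Qed.

Lemma osc_sin : osc sin (fun x => - cos x) (fun x => - sin x).
Proof.
  unfold osc. split; [|split;[|split;[|split;[|split]]]]; intro x.
  -  apply is_derive_Reals. replace (sin x) with (- - sin x) by ring.
    apply derivable_pt_lim_opp. apply derivable_pt_lim_cos.
  - apply is_derive_Reals. apply derivable_pt_lim_opp. apply derivable_pt_lim_sin.
  - apply (contD sin x (cos x)). apply is_derive_Reals. apply derivable_pt_lim_sin.
  - apply Rabs_le. apply SIN_bound.
  - rewrite Rabs_Ropp. apply Rabs_le. apply COS_bound.
  - rewrite Rabs_Ropp. apply Rabs_le. apply SIN_bound.
Qed.

Lemma deriv_w (S s : R -> R) (w : R) : w <> 0 -> (forall x, is_derive S x (s x)) ->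
  forall t, is_derive (fun t => S (t * w) / w) t (s (t * w)).
Proof.
  intros Hw HS t.
  assert (H1 : is_derive (fun t => t * w) t w).
  { auto_derive. auto. ring. }
  pose proof (is_derive_comp S (fun t => t * w) t (s (t * w)) w (HS (t * w)) H1) as H2.
  pose proof (is_derive_scal _ t (/ w) _ H2) as H3.
  apply (is_derive_ext (fun t => / w * S (t * w))). intros; unfold Rdiv; apply Rmult_comm.
  replace (s (t * w)) with (/ w * scal w (s (t * w))). exact H3.
  unfold scal; simpl; unfold mult; simpl. field. exact Hw.
Qed.

Lemma cont_w (s : R -> R) (w : R) : (forall x, continuous s x) -> forall t, continuous (fun t => s (t * w)) t.
Proof.
  intros Hs t. apply (continuous_comp (fun t => t * w) s). 
  apply (contD _ t w). auto_derive. auto. ring.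
  apply Hs.
Qed.

Definition amp (g dg : R -> R) : Prop :=
  (forall t, 0 < t -> is_derive g t (dg t)) /\ (forall t, 0 < t -> continuous dg t) /\
  (forall t, 0 < t -> dg t <= 0) /\ (forall t, 0 < t -> 0 <= g t) /\
  (forall e, 0 < e -> exists M, forall t, M < t -> g t < e).

Lemma amp_decr g dg : amp g dg -> forall x y, 0 < x -> x <= y -> g y <= g x.
Proof.
  intros [H1 [H2 [H3 _]]] x y Hx Hxy.
  cut (- g x <= - g y). lra.
  apply (incr_of_deriv (fun t => - g t) (fun t => - dg t) 0 (y+1)); try lra.
  intros t Ht. apply (is_derive_opp g t (dg t)). apply H1; lra.
  intros t Ht. pose proof (H3 t ltac:(lra)). lra.
Qed.

Lemma amp_cont g dg : amp g dg -> forall t, 0 < t -> continuous g t.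
Proof. intros [H1 _] t Ht. apply (contD g t (dg t)). apply H1; auto. Qed.

Lemma tail_bound (g dg s S : R -> R) (w T b : R) :
  amp g dg -> (forall x, is_derive S x (s x)) -> (forall x, continuous s x) ->
  (forall x, Rabs (S x) <= 1) -> 0 < w -> 0 < T <= b ->
  ex_RInt (fun t => g t * s (t * w)) T b /\
  Rabs (RInt (fun t => g t * s (t * w)) T b) <= 2 * g T / w.
Proof.
  intros Ha HS Hs HSb Hw HTb.
  pose proof Ha as [A1 [A2 [A3 [A4 A5]]]].
  destruct (ibp_bound g dg (fun t => S (t * w) / w) (fun t => s (t * w)) T b (- / w) (/ w)) as [E [L U]].
  lra.
  { intros t Ht. split; [|split; [|split; [|split; [|split]]]].
    - apply A1; lra.
    - apply deriv_w; auto. lra.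
    - apply A2; lra.
    - apply cont_w; auto.
    - apply A3; lra.
    - specialize (HSb (t * w)). apply Rabs_le_between in HSb.
      unfold Rdiv. pose proof (Rinv_0_lt_compat w Hw). split; nra. }
  split; auto.
  pose proof (amp_decr g dg Ha T b ltac:(lra) ltac:(lra)).
  pose proof (A4 b ltac:(lra)). pose proof (A4 T ltac:(lra)).
  pose proof (HSb (b * w)) as Hb. pose proof (HSb (T * w)) as HT.
  apply Rabs_le_between in Hb. apply Rabs_le_between in HT.
  set (iw := / w) in *. assert (0 < iw) by (apply Rinv_0_lt_compat; auto).
  unfold Rdiv in *. fold iw in L, U |- *.
  assert (P1 : 0 <= g b * iw) by nra. assert (P2 : 0 <= g T * iw) by nra.
  replace (g b * (S (b * w) * iw)) with ((g b * iw) * S (b * w)) in L, U by ring.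
  replace (g T * (S (T * w) * iw)) with ((g T * iw) * S (T * w)) in L, U by ring.
  assert (Q1 : - (g b * iw) <= (g b * iw) * S (b * w) <= g b * iw) by (split; nra).
  assert (Q2 : - (g T * iw) <= (g T * iw) * S (T * w) <= g T * iw) by (split; nra).
  assert (Q3 : g b * iw <= g T * iw) by nra.
  apply Rabs_le. split; nra.
Qed.

Lemma abs_swap (h : R -> R) a b : ex_RInt h a b -> Rabs (RInt h b a) = Rabs (RInt h a b).
Proof.
  intro E. rewrite <- (opp_RInt_swap (V:=R_CompleteNormedModule) h a b E).
  unfold opp; simpl. apply Rabs_Ropp.
Qed.

Lemma sym_bound (h : R -> R) (P : R -> Prop) (B : R -> R -> R) :
  (forall a b, P a -> P b -> ex_RInt h a b) ->
  (forall a b, P a -> P b -> a <= b -> Rabs (RInt h a b) < B a b) ->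
  (forall a b, B a b = B b a) ->
  forall a b, P a -> P b -> Rabs (RInt h a b) < B a b.
Proof.
  intros E H HB a b Ha Hb. destruct (Rle_or_lt a b).
  - apply H; auto.
  - rewrite <- abs_swap by (apply E; auto). rewrite HB. apply H; auto; lra.
Qed.

Lemma rpow_prim (c : R) t : 0 < t -> 0 < c ->
  is_derive (fun t => Rpower t c / c) t (Rpower t (c - 1)).
Proof.
  intros Ht Hc.
  pose proof (is_derive_scal _ t (/ c) _ (rp_deriv t c Ht)) as H.
  apply (is_derive_ext (fun t => / c * Rpower t c)). intros; unfold Rdiv; apply Rmult_comm.
  replace (Rpower t (c - 1)) with (/ c * (c * Rpower t (c - 1))) by (field; lra). exact H.
Qed.

Lemma near0_bound (h : R -> R) (sg K a b : R) :
  0 < sg < 1 -> 0 < a <= b ->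
  (forall t, 0 < t -> continuous h t) ->
  (forall t, a <= t <= b -> Rabs (h t) <= K * Rpower t (- sg)) ->
  Rabs (RInt h a b) <= K * (Rpower b (1 - sg) / (1 - sg)).
Proof.
  intros Hs Hab Hc Hb.
  assert (Ih : ex_RInt h a b).
  { apply exR. intros z Hz. rewrite Rmin_left, Rmax_right in Hz by lra. apply Hc. lra. }
  assert (I1 : is_RInt (fun t => K * Rpower t (- sg)) a b
                 (K * (Rpower b (1 - sg) / (1 - sg)) - K * (Rpower a (1 - sg) / (1 - sg)))).
  { apply (IRD (fun t => K * (Rpower t (1 - sg) / (1 - sg)))).
    - intros x Hx. rewrite Rmin_left, Rmax_right in Hx by lra.
      apply is_derive_scal. replace (- sg) with ((1 - sg) - 1) by ring. apply rpow_prim; lra.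
    - intros x Hx. rewrite Rmin_left, Rmax_right in Hx by lra.
      apply (cmul (fun _ => K) (fun t => Rpower t (- sg))).
      apply continuous_const. apply rp_cont. lra. }
  assert (Ex : ex_RInt (fun t => K * Rpower t (- sg)) a b) by (eexists; exact I1).
  apply RIntU in I1.
  assert (Hp : 0 <= K * (Rpower a (1 - sg) / (1 - sg))).
  { assert (0 <= K).
    { specialize (Hb a ltac:(lra)). pose proof (Rabs_pos (h a)). pose proof (rp_pos a (- sg)). nra. }
    apply Rmult_le_pos; auto. apply Rlt_le, Rdiv_lt_0_compat. apply rp_pos. lra. }
  assert (U : RInt h a b <= RInt (fun t => K * Rpower t (- sg)) a b).
  { apply RInt_le; auto. lra. intros t Ht. specialize (Hb t ltac:(lra)).
    pose proof (Rle_abs (h t)). lra. }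
  assert (L : RInt (fun t => - (K * Rpower t (- sg))) a b <= RInt h a b).
  { apply RInt_le; auto. lra.
    apply (ex_RInt_ext (fun t => (-1) * (K * Rpower t (- sg)))); intros; try (apply exS; auto).
    change (-1 * (K * Rpower x (- sg)) = - (K * Rpower x (- sg))). ring.
    intros t Ht. specialize (Hb t ltac:(lra)).
    pose proof (Rle_abs (- h t)). rewrite Rabs_Ropp in H. lra. }
  rewrite (RInt_ext _ (fun t => (-1) * (K * Rpower t (- sg)))) in L.
  rewrite RIntS in L; auto.
  apply Rabs_le. lra.
  intros. change (- (K * Rpower x (- sg)) = -1 * (K * Rpower x (- sg))). ring.
Qed.

Lemma exist_osc (g dg s S : R -> R) (sg K d : R) :
  amp g dg -> (forall x, is_derive S x (s x)) -> (forall x, continuous s x) ->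
  (forall x, Rabs (s x) <= 1) -> (forall x, Rabs (S x) <= 1) ->
  0 < sg < 1 -> 0 < d -> (forall t, 0 < t < d -> g t <= K * Rpower t (- sg)) ->
  forall w, 0 < w -> exists l, is_RInt_gen (fun t => g t * s (t * w)) (at_right 0) (Rbar_locally p_infty) l.
Proof.
  intros Ha HS Hs Hsb HSb Hsg Hd Hg w Hw.
  pose proof Ha as [A1 [A2 [A3 [A4 A5]]]].
  assert (Hc : forall t, 0 < t -> continuous (fun t => g t * s (t * w)) t).
  { intros t Ht. apply cmul. apply (amp_cont g dg Ha); auto. apply cont_w; auto. }
  assert (Ex : forall a b, 0 < a -> 0 < b -> ex_RInt (fun t => g t * s (t * w)) a b).
  { intros a b Ha' Hb'. apply exR. intros z Hz. apply Hc.
    pose proof (Rmin_glb_lt a b 0 Ha' Hb'). lra. }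
  apply gen_exists; auto.
  - intros e He. set (Kp := Rabs K + 1).
    assert (HKp : 0 < Kp) by (unfold Kp; pose proof (Rabs_pos K); lra).
    destruct (rp_small (1 - sg) ltac:(lra) (e * (1 - sg) / Kp)) as [d1 [Hd1 Hd1']].
    { apply Rdiv_lt_0_compat; auto. nra. }
    exists (Rmin d d1). split. apply Rmin_pos; auto.
    apply (sym_bound _ (fun a => 0 < a < Rmin d d1) (fun _ _ => e)); auto.
    + intros a b Ha' Hb'. apply Ex; lra.
    + intros a b Ha' Hb' Hab.
      pose proof (Rmin_l d d1). pose proof (Rmin_r d d1).
      eapply Rle_lt_trans. apply (near0_bound _ sg Kp); try lra. exact Hc.
      intros t Ht. rewrite Rabs_mult. specialize (Hsb (t * w)).
      pose proof (A4 t ltac:(lra)). rewrite (Rabs_pos_eq (g t)) by auto.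
      specialize (Hg t ltac:(lra)). pose proof (rp_pos t (- sg)).
      pose proof (Rle_abs K). pose proof (Rabs_pos (s (t * w))).
      assert (g t * Rabs (s (t * w)) <= g t) by nra.
      unfold Kp. nra.
      specialize (Hd1' b ltac:(lra)).
      apply (Rmult_lt_compat_l Kp) in Hd1'; auto.
      replace (Kp * (e * (1 - sg) / Kp)) with (e * (1 - sg)) in Hd1' by (field; lra).
      replace (Kp * (Rpower b (1 - sg) / (1 - sg))) with (Kp * Rpower b (1 - sg) / (1 - sg)) by (field; lra).
      apply (Rmult_lt_reg_r (1 - sg)). lra.
      replace (Kp * Rpower b (1 - sg) / (1 - sg) * (1 - sg)) with (Kp * Rpower b (1 - sg)) by (field; lra).
      lra.
  - intros e He. destruct (A5 (e * w / 2)) as [M HM].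
    { apply Rmult_lt_0_compat. nra. lra. }
    exists (Rmax M 1).
    apply (sym_bound _ (fun a => Rmax M 1 < a) (fun _ _ => e)); auto.
    + intros a b Ha' Hb'. pose proof (Rmax_r M 1). apply Ex; lra.
    + intros a b Ha' Hb' Hab. pose proof (Rmax_r M 1). pose proof (Rmax_l M 1).
      destruct (tail_bound g dg s S w a b Ha HS Hs HSb Hw ltac:(lra)) as [_ Hb].
      eapply Rle_lt_trans. exact Hb.
      specialize (HM a ltac:(lra)).
      apply (Rmult_lt_reg_r w). auto.
      replace (2 * g a / w * w) with (2 * g a) by (field; lra). lra.
Qed.

Lemma abs_int_le (h k : R -> R) a b : a <= b -> ex_RInt h a b -> ex_RInt k a b ->
  (forall t, a < t < b -> Rabs (h t) <= k t) -> Rabs (RInt h a b) <= RInt k a b.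
Proof.
  intros Hab Eh Ek H.
  assert (U : RInt h a b <= RInt k a b).
  { apply RInt_le; auto. intros t Ht. specialize (H t Ht). pose proof (Rle_abs (h t)). lra. }
  assert (L : RInt (fun t => -1 * k t) a b <= RInt h a b).
  { apply RInt_le; auto. apply exS; auto.
    intros t Ht. specialize (H t Ht). pose proof (Rle_abs (- h t)). rewrite Rabs_Ropp in H0. lra. }
  rewrite RIntS in L; auto. apply Rabs_le. lra.
Qed.

Lemma deriv_Sw (S s : R -> R) (w : R) : (forall x, is_derive S x (s x)) ->
  forall t, is_derive (fun t => S (t * w)) t (w * s (t * w)).
Proof.
  intros HS t.
  assert (H1 : is_derive (fun t => t * w) t w) by (auto_derive; auto; ring).
  exact (is_derive_comp S (fun t => t * w) t (s (t * w)) w (HS (t * w)) H1).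
Qed.

Section PartA.
Variable f : R -> R.
Hypothesis Hinf : filterlim f (Rbar_locally p_infty) (locally 0).
Hypothesis HC2 : C2_pos f.
Hypothesis Hconv : convex_pos f.

Lemma amp_f : amp f (Derive f).
Proof.
  split; [|split; [|split; [|split]]].
  - intros; apply (f_isd f HC2); auto.
  - intros; apply (f_cont1 f HC2); auto.
  - intros; apply f1_nonpos; auto.
  - intros; apply f_nonneg; auto.
  - intros e He. destruct (lim_inf_eps f 0 Hinf e He) as [M HM]. exists M.
    intros t Ht. specialize (HM t Ht). rewrite Rminus_0_r in HM. pose proof (Rle_abs (f t)). lra.
Qed.

Lemma amp_g : amp (fun t => - Derive f t) (fun t => - Derive (Derive f) t).
Proof.
  split; [|split; [|split; [|split]]].
  - intros t Ht. apply (is_derive_opp (Derive f)). apply (f_isd2 f HC2); auto.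
  - intros t Ht. apply (continuous_opp (V:=R_NormedModule) (Derive (Derive f))). apply (f_cont2 f HC2); auto.
  - intros t Ht. pose proof (f2_nonneg f HC2 Hconv t Ht). lra.
  - intros t Ht. pose proof (f1_nonpos f Hinf HC2 Hconv t Ht). lra.
  - intros e He. destruct (lim_inf_eps f 0 Hinf (e/2) ltac:(lra)) as [M HM]. exists (Rmax M 0 + 1).
    intros t Ht. pose proof (Rmax_l M 0). pose proof (Rmax_r M 0).
    destruct (MVT_cor2 f (Derive f) (t - 1) t) as [c [E Hc]]. lra.
    { intros c Hc. apply is_derive_Reals. apply (f_isd f HC2). lra. }
    pose proof (f1_incr f HC2 Hconv c t ltac:(lra) ltac:(lra)).
    pose proof (HM t ltac:(lra)). pose proof (HM (t - 1) ltac:(lra)).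
    rewrite Rminus_0_r in *. apply Rabs_def2 in H2. apply Rabs_def2 in H3. nra.
Qed.

Hypothesis H0 : filterlim f (at_right 0) (locally (f 0)).

Lemma partA_bound (s S U : R -> R) (w T l : R) :
  osc s S U -> 0 < w -> 0 < T ->
  is_RInt_gen (fun t => f t * s (t * w)) (at_right 0) (Rbar_locally p_infty) l ->
  Rabs (w * l + f 0 * S 0) <= f 0 - f T + 2 * (- Derive f T) / w.
Proof.
  intros [HS [HU [Hs [Hsb [HSb HUb]]]]] Hw HT Hl.
  set (B := f 0 - f T + 2 * (- Derive f T) / w).
  assert (Hmain : Rabs (l - (- (f 0 * S 0) / w)) <= B / w).
  2:{ replace (w * l + f 0 * S 0) with (w * (l - - (f 0 * S 0) / w)) by (field; lra).
      rewrite Rabs_mult, Rabs_pos_eq by lra.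
      apply (Rmult_le_compat_l w) in Hmain; [|lra]. replace (w * (B / w)) with B in Hmain by (field; lra).
      exact Hmain. }
  apply (gen_bound_abs _ l _ _ Hl).
  intros e He.
  set (e1 := e * w / 4).
  assert (He1 : 0 < e1) by (unfold e1; nra).
  destruct (cont_eps S 0 (contD S 0 (s 0) (HS 0)) (e1 / (Rabs (f 0) + 1))) as [r [Hr Hr']].
  { apply Rdiv_lt_0_compat; auto. pose proof (Rabs_pos (f 0)); lra. }
  destruct (lim_0_eps f (f 0) H0 e1 He1) as [d1 [Hd1 Hd1']].
  destruct (lim_inf_eps f 0 Hinf e1 He1) as [M HM].
  exists (Rmin (Rmin d1 T) (r / w)). split.
  { apply Rmin_pos. apply Rmin_pos; auto. apply Rdiv_lt_0_compat; auto. }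
  exists (Rmax M T). intros a b Ha Hb.
  pose proof (Rmin_l (Rmin d1 T) (r / w)). pose proof (Rmin_r (Rmin d1 T) (r / w)).
  pose proof (Rmin_l d1 T). pose proof (Rmin_r d1 T).
  pose proof (Rmax_l M T). pose proof (Rmax_r M T).
  assert (Hawr : a * w < r).
  { apply (Rmult_lt_reg_r (/ w)). apply Rinv_0_lt_compat; auto.
    replace (a * w * / w) with a by (field; lra). unfold Rdiv in *. lra. }
  assert (Ef : forall t, a <= t <= b -> 0 < t) by (intros; lra).
  assert (I1 : is_RInt (fun t => Derive f t * S (t * w) + f t * (w * s (t * w))) a b
                 (f b * S (b * w) - f a * S (a * w))).
  { apply (IRD (fun t => f t * S (t * w))).
    - intros t Ht. rewrite Rmin_left, Rmax_right in Ht by lra.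
      apply (is_derive_mult f (fun t => S (t * w))). apply (f_isd f HC2); lra. apply deriv_Sw; auto.
      intros; apply Rmult_comm.
    - intros t Ht. rewrite Rmin_left, Rmax_right in Ht by lra.
      apply cplus; apply cmul.
      apply (f_cont1 f HC2); lra. apply cont_w. intro x; apply (contD S x (s x)); auto.
      apply (f_cont f HC2); lra. apply (cmul (fun _ => w)). apply continuous_const. apply cont_w; auto. }
  assert (Eh : ex_RInt (fun t => f t * s (t * w)) a b).
  { apply exR. intros z Hz. rewrite Rmin_left, Rmax_right in Hz by lra. apply cmul.
    apply (f_cont f HC2); lra. apply cont_w; auto. }
  assert (Eg : forall x y, 0 < x -> 0 < y -> ex_RInt (fun t => - Derive f t * S (t * w)) x y).
  { intros x y Hx Hy. apply exR. intros z Hz.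
    assert (0 < z) by (pose proof (Rmin_glb_lt x y 0 Hx Hy); lra).
    apply cmul. apply (amp_cont _ _ amp_g); auto. apply cont_w. intro u; apply (contD S u (s u)); auto. }
  apply RIntU in I1.
  rewrite RIntP in I1.
  2:{ apply exR. intros z Hz. rewrite Rmin_left, Rmax_right in Hz by lra. apply cmul.
      apply (f_cont1 f HC2); lra. apply cont_w. intro x; apply (contD S x (s x)); auto. }
  2:{ apply (ex_RInt_ext (fun t => w * (f t * s (t * w)))); intros; try (apply exS; auto).
      change (w * (f x * s (x * w)) = f x * (w * s (x * w))). ring. }
  rewrite (RInt_ext (fun t => f t * (w * s (t * w))) (fun t => w * (f t * s (t * w)))) in I1.
  2:{ intros; change (f x * (w * s (x * w)) = w * (f x * s (x * w))); ring. }
  rewrite RIntS in I1 by auto.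
  rewrite (RInt_ext (fun t => Derive f t * S (t * w)) (fun t => -1 * (- Derive f t * S (t * w)))) in I1.
  2:{ intros; change (Derive f x * S (x * w) = -1 * (- Derive f x * S (x * w))); ring. }
  rewrite RIntS in I1 by (apply Eg; lra).
  rewrite <- (RInt_Chasles _ a T b) in I1 by (apply Eg; lra).
  change (plus ?x ?y) with (x + y) in I1.
  assert (B1 : Rabs (RInt (fun t => - Derive f t * S (t * w)) a T) <= f a - f T).
  { assert (IT : is_RInt (fun t => - Derive f t) a T (- f T - - f a)).
    { apply (IRD (fun t => - f t)).
      - intros t Ht. rewrite Rmin_left, Rmax_right in Ht by lra.
        apply (is_derive_opp f). apply (f_isd f HC2); lra.
      - intros t Ht. rewrite Rmin_left, Rmax_right in Ht by lra.
        apply (amp_cont _ _ amp_g); lra. }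
    replace (f a - f T) with (- f T - - f a) by ring. rewrite <- (RIntU _ _ _ _ IT).
    apply abs_int_le. lra. apply Eg; lra. eexists; exact IT.
    intros t Ht. rewrite Rabs_mult. pose proof (f1_nonpos f Hinf HC2 Hconv t ltac:(lra)).
    rewrite Rabs_pos_eq by lra. specialize (HSb (t * w)). pose proof (Rabs_pos (S (t * w))). nra. }
  destruct (tail_bound _ _ S U w T b amp_g HU (fun x => contD S x (s x) (HS x)) HUb Hw ltac:(lra)) as [_ B2].
  assert (Hfb : Rabs (f b) < e1) by (specialize (HM b ltac:(lra)); rewrite Rminus_0_r in HM; exact HM).
  assert (Hfa : Rabs (f a - f 0) < e1) by (apply Hd1'; lra).
  assert (HSa : Rabs (S (a * w) - S 0) < e1 / (Rabs (f 0) + 1)).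
  { apply Hr'. rewrite Rminus_0_r, Rabs_pos_eq; nra. }
  assert (T1 : Rabs (f b * S (b * w)) <= e1).
  { rewrite Rabs_mult. specialize (HSb (b * w)). pose proof (Rabs_pos (f b)). pose proof (Rabs_pos (S (b * w))). nra. }
  assert (T2 : Rabs (f a * S (a * w) - f 0 * S 0) <= 2 * e1).
  { replace (f a * S (a * w) - f 0 * S 0) with ((f a - f 0) * S (a * w) + f 0 * (S (a * w) - S 0)) by ring.
    eapply Rle_trans. apply Rabs_triang. rewrite !Rabs_mult.
    specialize (HSb (a * w)). pose proof (Rabs_pos (f a - f 0)). pose proof (Rabs_pos (S (a * w) - S 0)).
    pose proof (Rabs_pos (f 0)).
    assert (Rabs (f 0) * Rabs (S (a * w) - S 0) <= e1).
    { assert (Rabs (S (a * w) - S 0) * (Rabs (f 0) + 1) < e1).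
      { apply (Rmult_lt_compat_r (Rabs (f 0) + 1)) in HSa; [|lra].
        replace (e1 / (Rabs (f 0) + 1) * (Rabs (f 0) + 1)) with e1 in HSa by (field; lra). exact HSa. }
      nra. }
    nra. }
  assert (Hfa' : f a <= f 0 + e1) by (apply Rabs_def2 in Hfa; lra).
  set (J1 := RInt (fun t => - Derive f t * S (t * w)) a T) in *.
  set (J2 := RInt (fun t => - Derive f t * S (t * w)) T b) in *.
  set (R0 := RInt (fun t => f t * s (t * w)) a b) in *.
  change (-1 * (J1 + J2) + w * R0 = f b * S (b * w) - f a * S (a * w)) in I1.
  assert (Hid : w * R0 = f b * S (b * w) - f a * S (a * w) + (J1 + J2)) by lra.
  assert (Hw' : Rabs (w * (R0 - - (f 0 * S 0) / w)) <= B + e * w).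
  { replace (w * (R0 - - (f 0 * S 0) / w)) with (f b * S (b * w) - (f a * S (a * w) - f 0 * S 0) + J1 + J2)
      by (field_simplify; [lra | lra]).
    unfold B. pose proof (Rabs_triang (f b * S (b * w) - (f a * S (a * w) - f 0 * S 0) + J1) J2) as Z1.
    pose proof (Rabs_triang (f b * S (b * w) - (f a * S (a * w) - f 0 * S 0)) J1) as Z2.
    assert (Z3 : Rabs (f b * S (b * w) - (f a * S (a * w) - f 0 * S 0)) <=
                 Rabs (f b * S (b * w)) + Rabs (f a * S (a * w) - f 0 * S 0)).
    { unfold Rminus at 1. rewrite <- (Rabs_Ropp (f a * S (a * w) - f 0 * S 0)). apply Rabs_triang. }
    unfold e1 in *. lra. }
  rewrite Rabs_mult, (Rabs_pos_eq w) in Hw' by lra.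
  apply (Rmult_le_reg_l w). lra.
  replace (w * (B / w + e)) with (B + e * w) by (field; lra). exact Hw'.
Qed.

End PartA.

Lemma rp_inv w c : 0 < w -> Rpower (/ w) c = / Rpower w c.
Proof. intro Hw. unfold Rpower. rewrite ln_Rinv by auto. rewrite <- exp_Ropp. f_equal. ring. Qed.

Lemma rp_mul w a b : Rpower w a * Rpower w b = Rpower w (a + b).
Proof. rewrite Rpower_plus. reflexivity. Qed.

Lemma rp_1m w s : 0 < w -> Rpower w (1 - s) / w = Rpower (/ w) s.
Proof.
  intro Hw. rewrite rp_inv by auto. 
  replace (Rpower w (1 - s)) with (Rpower w 1 * Rpower w (- s)) by (rewrite rp_mul; f_equal; ring).
  rewrite Rpower_1, Rpower_Ropp by auto. field. split. apply Rgt_not_eq, rp_pos. lra.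
Qed.

Lemma rp_inv_cancel w c : 0 < w -> Rpower w c * Rpower (/ w) c = 1.
Proof. intro Hw. rewrite rp_inv by auto. field. apply Rgt_not_eq, rp_pos. Qed.

Section PartA2.
Variable f : R -> R.
Hypothesis Hinf : filterlim f (Rbar_locally p_infty) (locally 0).
Hypothesis HC2 : C2_pos f.
Hypothesis Hconv : convex_pos f.
Hypothesis H0 : filterlim f (at_right 0) (locally (f 0)).

Lemma f0_minus s1 e : 0 < s1 < 1 -> 0 < e ->
  filterlim (fun t => Rpower t s1 * Derive f t) (at_right 0) (locally 0) ->
  exists eta, 0 < eta /\ forall T, 0 < T < eta ->
    f 0 - f T <= e * (Rpower T (1 - s1) / (1 - s1)) /\ Rpower T s1 * (- Derive f T) <= e.
Proof.
  intros Hs He Hd.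
  destruct (lim_0_eps _ 0 Hd e He) as [eta [Heta Heta']].
  exists eta. split; auto. intros T HT.
  split.
  2:{ specialize (Heta' T HT). rewrite Rminus_0_r in Heta'. apply Rabs_def2 in Heta'. lra. }
  apply le_eps. intros e2 He2.
  destruct (lim_0_eps f (f 0) H0 e2 He2) as [d [Hd0 Hd']].
  set (a := Rmin d T / 2).
  assert (Ha : 0 < a) by (unfold a; pose proof (Rmin_pos d T Hd0 ltac:(lra)); lra).
  assert (Had : a < d) by (unfold a; pose proof (Rmin_l d T); lra).
  assert (HaT : a <= T) by (unfold a; pose proof (Rmin_r d T); lra).
  specialize (Hd' a (conj Ha Had)). apply Rabs_def2 in Hd'.
  assert (Mono : f a + e * (Rpower a (1 - s1) / (1 - s1)) <= f T + e * (Rpower T (1 - s1) / (1 - s1))).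
  { apply (incr_of_deriv (fun t => f t + e * (Rpower t (1 - s1) / (1 - s1)))
            (fun t => Derive f t + e * Rpower t (- s1)) 0 eta); try lra.
    - intros t Ht. apply (is_derive_plus f). apply (f_isd f HC2); lra.
      apply is_derive_scal. replace (- s1) with ((1 - s1) - 1) by ring. apply rpow_prim; lra.
    - intros t Ht. specialize (Heta' t Ht). rewrite Rminus_0_r in Heta'. apply Rabs_def2 in Heta'.
      pose proof (rp_pos t (- s1)).
      assert (E : Rpower t s1 * Rpower t (- s1) = 1) by (rewrite rp_mul; replace (s1 + - s1) with 0 by ring; apply Rpower_O; lra).
      assert (Rpower t (- s1) * (Rpower t s1 * Derive f t) >= - e * Rpower t (- s1)) by nra.
      replace (Rpower t (- s1) * (Rpower t s1 * Derive f t)) with (Derive f t * (Rpower t s1 * Rpower t (- s1))) in H1 by ring.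
      rewrite E in H1. lra. }
  assert (0 <= e * (Rpower a (1 - s1) / (1 - s1))).
  { apply Rmult_le_pos. lra. apply Rlt_le, Rdiv_lt_0_compat. apply rp_pos. lra. }
  lra.
Qed.

Lemma partA_lim s1 : 0 < s1 < 1 ->
  filterlim (fun t => Rpower t s1 * Derive f t) (at_right 0) (locally 0) ->
  forall e, 0 < e -> exists W, 1 <= W /\ forall w, W < w ->
    Rpower w (1 - s1) * (f 0 - f (/ w) + 2 * (- Derive f (/ w)) / w) <= e.
Proof.
  intros Hs Hd e He.
  set (e' := e / (1 / (1 - s1) + 2)).
  assert (He' : 0 < e') by (unfold e'; apply Rdiv_lt_0_compat; auto; pose proof (Rinv_0_lt_compat (1 - s1)); unfold Rdiv; lra).
  destruct (f0_minus s1 e' Hs He' Hd) as [eta [Heta Heta']].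
  exists (Rmax 1 (/ eta)). split. apply Rmax_l.
  intros w Hw. pose proof (Rmax_l 1 (/ eta)). pose proof (Rmax_r 1 (/ eta)).
  assert (Hw0 : 0 < w) by lra.
  assert (HT : 0 < / w < eta).
  { split. apply Rinv_0_lt_compat; lra.
    replace eta with (/ / eta) by (field; lra). apply Rinv_lt_contravar. 
    apply Rmult_lt_0_compat. apply Rinv_0_lt_compat; lra. lra. lra. }
  destruct (Heta' (/ w) HT) as [A1 A2].
  pose proof (rp_pos w (1 - s1)).
  rewrite Rmult_plus_distr_l.
  assert (P1 : Rpower w (1 - s1) * (f 0 - f (/ w)) <= e' / (1 - s1)).
  { eapply Rle_trans. apply Rmult_le_compat_l. lra. exact A1.
    replace (Rpower w (1 - s1) * (e' * (Rpower (/ w) (1 - s1) / (1 - s1)))) with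
      (e' * (Rpower w (1 - s1) * Rpower (/ w) (1 - s1)) / (1 - s1)) by (field; lra).
    rewrite rp_inv_cancel by lra. lra. }
  assert (P2 : Rpower w (1 - s1) * (2 * - Derive f (/ w) / w) <= 2 * e').
  { replace (Rpower w (1 - s1) * (2 * - Derive f (/ w) / w)) with (2 * (Rpower w (1 - s1) / w * - Derive f (/ w)))
      by (field; lra).
    rewrite rp_1m by lra. lra. }
  assert (E : e' / (1 - s1) + 2 * e' = e).
  { unfold e'. field. repeat split; lra. }
  lra.
Qed.
End PartA2.

Lemma gen_correct (h : R -> R) :
  (exists l, is_RInt_gen h (at_right 0) (Rbar_locally p_infty) l) ->
  is_RInt_gen h (at_right 0) (Rbar_locally p_infty) (RInt_gen h (at_right 0) (Rbar_locally p_infty)).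
Proof.
  intro H. apply (RInt_gen_correct (V:=R_CompleteNormedModule)
    (FFa := Proper_StrongProper _ (at_right_proper_filter 0))
    (FFb := Proper_StrongProper _ (Rbar_locally_filter p_infty))). exact H.
Qed.

Lemma rp_ge1_w w c : 1 <= w -> 0 <= c -> 1 <= Rpower w c.
Proof. intros Hw Hc. rewrite <- (Rpower_O w) by lra. apply Rle_Rpower; auto. Qed.

Lemma partA_result (f : R -> R) :
  filterlim f (Rbar_locally p_infty) (locally 0) -> C2_pos f -> convex_pos f ->
  filterlim f (at_right 0) (locally (f 0)) ->
    forall s1, 0 < s1 < 1 ->
    filterlim (fun t => Rpower t s1 * Derive f t) (at_right 0) (locally 0) ->
    exists Fc Fs : R -> R,
      (forall w, 0 < w -> is_Fcos f w (Fc w)) /\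
      (forall w, 0 < w -> is_Fsin f w (Fs w)) /\
      filterlim (fun w => Rpower w (2 - s1) * Fc w) (Rbar_locally p_infty) (locally 0) /\
      filterlim (fun w => w * Fs w) (Rbar_locally p_infty) (locally (f 0)).
Proof.
  intros Hinf HC2 Hconv H0 s1 Hs1 Hd.
  destruct (lim_0_eps f (f 0) H0 1 ltac:(lra)) as [d0 [Hd0 Hd0']].
  assert (Hbd : forall t, 0 < t < Rmin d0 1 -> f t <= (Rabs (f 0) + 1) * Rpower t (- (1/2))).
  { intros t Ht. pose proof (Rmin_l d0 1). pose proof (Rmin_r d0 1).
    specialize (Hd0' t ltac:(lra)). apply Rabs_def2 in Hd0'.
    pose proof (rp_ge1 (1/2) t ltac:(lra) ltac:(lra)). pose proof (Rle_abs (f 0)).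
    pose proof (Rabs_pos (f 0)). nra. }
  assert (Hmin : 0 < Rmin d0 1) by (apply Rmin_pos; lra).
  pose proof osc_cos as [Cs1 [Cs2 [Cs3 [Cs4 [Cs5 Cs6]]]]].
  pose proof osc_sin as [Sn1 [Sn2 [Sn3 [Sn4 [Sn5 Sn6]]]]].
  set (Fc := fun w => RInt_gen (fun t => f t * cos (t * w)) (at_right 0) (Rbar_locally p_infty)).
  set (Fs := fun w => RInt_gen (fun t => f t * sin (t * w)) (at_right 0) (Rbar_locally p_infty)).
  assert (HFc : forall w, 0 < w -> is_Fcos f w (Fc w)).
  { intros w Hw. unfold is_Fcos, is_Fsin, Fc, Fs. apply gen_correct.
    apply (exist_osc f (Derive f) cos sin (1/2) (Rabs (f 0) + 1) (Rmin d0 1)); auto.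
    apply amp_f; auto. lra. }
  assert (HFs : forall w, 0 < w -> is_Fsin f w (Fs w)).
  { intros w Hw. unfold is_Fcos, is_Fsin, Fc, Fs. apply gen_correct.
    apply (exist_osc f (Derive f) sin (fun x => - cos x) (1/2) (Rabs (f 0) + 1) (Rmin d0 1)); auto.
    apply amp_f; auto. lra. }
  exists Fc, Fs. split; auto. split; auto. split.
  - apply eps_lim_inf. intros e He.
    destruct (partA_lim f HC2 H0 s1 Hs1 Hd (e/2) ltac:(lra)) as [W [HW HW']].
    exists W. intros w Hw.
    pose proof (partA_bound f Hinf HC2 Hconv H0 cos sin (fun x => - cos x) w (/ w) (Fc w) osc_cos
                  ltac:(lra) ltac:(apply Rinv_0_lt_compat; lra) (HFc w ltac:(lra))) as B.
    rewrite sin_0, Rmult_0_r, Rplus_0_r in B.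
    specialize (HW' w Hw).
    rewrite Rminus_0_r.
    replace (Rpower w (2 - s1)) with (Rpower w (1 - s1) * w).
    2:{ rewrite <- (Rpower_1 w) at 2 by lra. rewrite rp_mul. f_equal. ring. }
    rewrite Rmult_assoc, Rabs_mult, (Rabs_pos_eq (Rpower w (1 - s1))) by (apply Rlt_le, rp_pos).
    pose proof (rp_pos w (1 - s1)).
    assert (Rpower w (1 - s1) * Rabs (w * Fc w) <= Rpower w (1 - s1) * (f 0 - f (/ w) + 2 * - Derive f (/ w) / w)).
    { apply Rmult_le_compat_l; lra. }
    lra.
  - apply eps_lim_inf. intros e He.
    destruct (partA_lim f HC2 H0 s1 Hs1 Hd (e/2) ltac:(lra)) as [W [HW HW']].
    exists W. intros w Hw.
    pose proof (partA_bound f Hinf HC2 Hconv H0 sin (fun x => - cos x) (fun x => - sin x) w (/ w) (Fs w) osc_sin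
                  ltac:(lra) ltac:(apply Rinv_0_lt_compat; lra) (HFs w ltac:(lra))) as B.
    cbv beta in B. rewrite cos_0 in B. replace (w * Fs w + f 0 * - (1)) with (w * Fs w - f 0) in B by ring.
    specialize (HW' w Hw).
    pose proof (rp_ge1_w w (1 - s1) ltac:(lra) ltac:(lra)).
    pose proof (Rabs_pos (w * Fs w - f 0)).
    assert (f 0 - f (/ w) + 2 * - Derive f (/ w) / w <= Rpower w (1 - s1) * (f 0 - f (/ w) + 2 * - Derive f (/ w) / w)) by nra.
    lra.
Qed.

Lemma amp_p sg : 0 < sg -> amp (fun u => Rpower u (- sg)) (fun u => - sg * Rpower u (- sg - 1)).
Proof.
  intro Hs. split; [|split; [|split; [|split]]].
  - intros t Ht. apply rp_deriv; auto.
  - intros t Ht. apply (cmul (fun _ => - sg) (fun u => Rpower u (- sg - 1))). apply continuous_const. apply rp_cont; auto.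
  - intros t Ht. pose proof (rp_pos t (- sg - 1)). nra.
  - intros t Ht. apply Rlt_le, rp_pos.
  - intros e He. destruct (rp_big_small sg Hs e He) as [M HM]. exists M. auto.
Qed.

Lemma amp_scale g dg c w : amp g dg -> 0 <= c -> 0 < w ->
  amp (fun u => c * g (u / w)) (fun u => c * dg (u / w) / w).
Proof.
  intros [A1 [A2 [A3 [A4 A5]]]] Hc Hw.
  assert (Dw : forall u, is_derive (fun u => u / w) u (/ w)).
  { intro u. auto_derive. auto. field. lra. }
  split; [|split; [|split; [|split]]].
  - intros t Ht.
    assert (Htw : 0 < t / w) by (apply Rdiv_lt_0_compat; auto).
    pose proof (is_derive_comp g (fun u => u / w) t (dg (t / w)) (/ w) (A1 _ Htw) (Dw t)) as H.
    pose proof (is_derive_scal _ t c _ H) as H'.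
    replace (c * dg (t / w) / w) with (c * scal (/ w) (dg (t / w))). exact H'.
    unfold scal; simpl; unfold mult; simpl. field. lra.
  - intros t Ht.
    assert (Htw : 0 < t / w) by (apply Rdiv_lt_0_compat; auto).
    apply (continuous_ext (fun u => (c / w) * dg (u / w))). intros; change (c / w * dg (x / w) = c * dg (x / w) / w); unfold Rdiv; ring.
    apply (cmul (fun _ => c / w) (fun u => dg (u / w))). apply continuous_const.
    apply (continuous_comp (fun u => u / w) dg). apply (contD _ t (/ w)); auto. apply A2; auto.
  - intros t Ht.
    assert (Htw : 0 < t / w) by (apply Rdiv_lt_0_compat; auto).
    specialize (A3 _ Htw). unfold Rdiv. pose proof (Rinv_0_lt_compat w Hw).
    assert (c * dg (t * / w) <= 0) by nra. nra.
  - intros t Ht. assert (Htw : 0 < t / w) by (apply Rdiv_lt_0_compat; auto).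
    specialize (A4 _ Htw). nra.
  - intros e He. destruct (A5 (e / (c + 1))) as [M HM]. apply Rdiv_lt_0_compat; lra.
    exists (Rmax M 0 * w). intros t Ht.
    pose proof (Rmax_l M 0). pose proof (Rmax_r M 0).
    assert (M < t / w).
    { apply (Rmult_lt_reg_r w); auto. replace (t / w * w) with t by (field; lra). nra. }
    specialize (HM _ H1).
    assert (c * g (t / w) <= c * (e / (c + 1))) by (apply Rmult_le_compat_l; lra).
    assert (c * (e / (c + 1)) < e).
    { apply (Rmult_lt_reg_r (c + 1)). lra. replace (c * (e / (c + 1)) * (c + 1)) with (c * e) by (field; lra). nra. }
    lra.
Qed.

Section PartB.
Variable f : R -> R.
Hypothesis Hinf : filterlim f (Rbar_locally p_infty) (locally 0).
Hypothesis HC2 : C2_pos f.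
Hypothesis Hconv : convex_pos f.
Variable sg : R.
Hypothesis Hsg : 0 < sg < 1.

Lemma rp_w1 w : 0 < w -> Rpower w (1 - sg) = w * Rpower w (- sg).
Proof. intro Hw. rewrite <- (Rpower_1 w) at 2 by lra. rewrite rp_mul. f_equal; try ring. Qed.

Lemma change_var (s : R -> R) (w a b : R) :
  (forall x, continuous s x) -> 0 < w -> 0 < a -> 0 < b ->
  Rpower w (1 - sg) * RInt (fun t => f t * s (t * w)) a b =
  RInt (fun u => (Rpower w (- sg) * f (u / w)) * s (u * 1)) (a * w) (b * w).
Proof.
  intros Hs Hw Ha Hb.
  set (m := fun u => (Rpower w (- sg) * f (u / w)) * s (u * 1)).
  assert (Em : ex_RInt m (w * a + 0) (w * b + 0)).
  { apply exR. intros z Hz.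
    assert (0 < z) by (pose proof (Rmin_glb_lt (w * a + 0) (w * b + 0) 0 ltac:(nra) ltac:(nra)); lra).
    unfold m. apply cmul. apply (cmul (fun _ => Rpower w (- sg)) (fun u => f (u / w))).
    apply continuous_const. apply (continuous_comp (fun u => u / w) f).
    apply (contD _ z (/ w)). auto_derive; auto. field; lra.
    apply (f_cont f HC2). apply Rdiv_lt_0_compat; auto.
    apply cont_w; auto. }
  pose proof (is_RInt_comp_lin m w 0 a b _ (RInt_correct _ _ _ Em)) as H.
  apply RIntU in H.
  rewrite (RInt_ext _ (fun t => Rpower w (1 - sg) * (f t * s (t * w)))) in H.
  2:{ intros x Hx. unfold m. change (w * ((Rpower w (- sg) * f ((w * x + 0) / w)) * s ((w * x + 0) * 1)) =
         Rpower w (1 - sg) * (f x * s (x * w))).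
      rewrite rp_w1 by auto. replace ((w * x + 0) / w) with x by (field; lra).
      replace ((w * x + 0) * 1) with (x * w) by ring. ring. }
  rewrite RIntS in H.
  2:{ apply exR. intros z Hz.
      assert (0 < z) by (pose proof (Rmin_glb_lt a b 0 Ha Hb); lra).
      apply cmul. apply (f_cont f HC2); auto. apply cont_w; auto. }
  rewrite H. f_equal; ring.
Qed.

End PartB.

Lemma rp_ratio u w c : 0 < u -> 0 < w -> Rpower u (- c) * Rpower (u / w) c = Rpower w (- c).
Proof.
  intros Hu Hw. unfold Rdiv. rewrite <- Rpower_mult_distr by (auto; apply Rinv_0_lt_compat; auto).
  rewrite rp_inv by auto. rewrite !Rpower_Ropp. field. split; apply Rgt_not_eq, rp_pos.
Qed.

Section PartB2.
Variable f : R -> R.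
Hypothesis Hinf : filterlim f (Rbar_locally p_infty) (locally 0).
Hypothesis HC2 : C2_pos f.
Hypothesis Hconv : convex_pos f.
Variable sg : R.
Hypothesis Hsg : 0 < sg < 1.

Lemma finite_compare (s S : R -> R) (C eps eta w A a b : R) :
  (forall x, is_derive S x (s x)) -> (forall x, continuous s x) ->
  (forall x, Rabs (s x) <= 1) -> (forall x, Rabs (S x) <= 1) ->
  0 <= C -> 0 < w -> 0 < a -> a * w < A -> A < b * w -> A < eta * w ->
  (forall t, 0 < t < eta -> Rabs (Rpower t sg * f t - C) <= eps) ->
  Rabs (RInt (fun u => (Rpower w (- sg) * f (u / w)) * s (u * 1)) (a * w) (b * w)
        - C * RInt (fun u => Rpower u (- sg) * s (u * 1)) (a * w) (b * w))
  <= eps * (Rpower A (1 - sg) / (1 - sg)) + 2 * (Rpower w (- sg) * f (A / w)) / 1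
     + C * (2 * Rpower A (- sg) / 1).
Proof.
  intros HS Hs Hsb HSb HC Hw Ha HA1 HA2 HA3 Heps.
  set (m := fun u => (Rpower w (- sg) * f (u / w)) * s (u * 1)).
  set (k := fun u => Rpower u (- sg) * s (u * 1)).
  assert (Hfw : forall u, 0 < u -> continuous (fun u => Rpower w (- sg) * f (u / w)) u).
  { intros u Hu. apply (cmul (fun _ => Rpower w (- sg)) (fun u => f (u / w))).
    apply continuous_const. apply (continuous_comp (fun u => u / w) f).
    apply (contD _ u (/ w)). auto_derive; auto. field; lra.
    apply (f_cont f HC2). apply Rdiv_lt_0_compat; auto. }
  assert (Em : forall x y, 0 < x -> 0 < y -> ex_RInt m x y).
  { intros x y Hx Hy. apply exR. intros z Hz.
    assert (0 < z) by (pose proof (Rmin_glb_lt x y 0 Hx Hy); lra).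
    unfold m. apply cmul. apply Hfw; auto. apply cont_w; auto. }
  assert (Ek : forall x y, 0 < x -> 0 < y -> ex_RInt k x y).
  { intros x y Hx Hy. apply exR. intros z Hz.
    assert (0 < z) by (pose proof (Rmin_glb_lt x y 0 Hx Hy); lra).
    unfold k. apply cmul. apply rp_cont; auto. apply cont_w; auto. }
  assert (Haw : 0 < a * w) by nra.
  rewrite <- (RInt_Chasles m (a * w) A (b * w)) by (apply Em; lra).
  rewrite <- (RInt_Chasles k (a * w) A (b * w)) by (apply Ek; lra).
  change (plus ?x ?y) with (x + y).
  destruct (tail_bound _ _ s S 1 A (b * w) (amp_scale f (Derive f) (Rpower w (- sg)) w (amp_f f Hinf HC2 Hconv)
              ltac:(apply Rlt_le, rp_pos) Hw) HS Hs HSb ltac:(lra) ltac:(lra)) as [_ Tm].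
  destruct (tail_bound _ _ s S 1 A (b * w) (amp_p sg ltac:(lra)) HS Hs HSb ltac:(lra) ltac:(lra)) as [_ Tk].
  fold m in Tm. fold k in Tk.
  assert (Near : Rabs (RInt m (a * w) A - C * RInt k (a * w) A) <= eps * (Rpower A (1 - sg) / (1 - sg))).
  { assert (E1 : RInt m (a * w) A - C * RInt k (a * w) A = RInt (fun u => m u + (- C) * k u) (a * w) A).
    { rewrite RIntP. rewrite RIntS. ring. apply Ek; lra. apply Em; lra. apply exS. apply Ek; lra. }
    rewrite E1.
    assert (IP : is_RInt (fun u => eps * Rpower u (- sg)) (a * w) A
                   (eps * (Rpower A (1 - sg) / (1 - sg)) - eps * (Rpower (a * w) (1 - sg) / (1 - sg)))).
    { apply (IRD (fun t => eps * (Rpower t (1 - sg) / (1 - sg)))).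
      - intros x Hx. rewrite Rmin_left, Rmax_right in Hx by lra.
        apply is_derive_scal. replace (- sg) with ((1 - sg) - 1) by ring. apply rpow_prim; lra.
      - intros x Hx. rewrite Rmin_left, Rmax_right in Hx by lra.
        apply (cmul (fun _ => eps) (fun t => Rpower t (- sg))).
        apply continuous_const. apply rp_cont. lra. }
    assert (Heps0 : 0 <= eps).
    { specialize (Heps (eta / 2)). assert (0 < eta) by nra. pose proof (Rabs_pos (Rpower (eta / 2) sg * f (eta / 2) - C)).
      assert (HH : 0 < eta / 2 < eta) by lra. specialize (Heps HH). lra. }
    assert (Pa : 0 <= eps * (Rpower (a * w) (1 - sg) / (1 - sg))).
    { apply Rmult_le_pos; auto. apply Rlt_le, Rdiv_lt_0_compat. apply rp_pos. lra. }
    eapply Rle_trans. apply abs_int_le. lra.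
    apply (ex_RInt_plus (V:=R_NormedModule)). apply Em; lra. apply exS. apply Ek; lra.
    eexists; exact IP.
    2:{ rewrite (RIntU _ _ _ _ IP). lra. }
    intros u Hu. unfold m, k.
    assert (Hu0 : 0 < u) by lra.
    assert (Huw : 0 < u / w < eta).
    { split. apply Rdiv_lt_0_compat; auto. apply (Rmult_lt_reg_r w); auto.
      replace (u / w * w) with u by (field; lra). lra. }
    specialize (Heps _ Huw).
    replace (Rpower w (- sg) * f (u / w) * s (u * 1) + - C * (Rpower u (- sg) * s (u * 1)))
      with ((Rpower u (- sg) * (Rpower (u / w) sg * f (u / w) - C)) * s (u * 1)).
    2:{ rewrite <- (rp_ratio u w sg) by auto. ring. }
    rewrite Rabs_mult, Rabs_mult, (Rabs_pos_eq (Rpower u (- sg))) by (apply Rlt_le, rp_pos).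
    pose proof (rp_pos u (- sg)). specialize (Hsb (u * 1)). pose proof (Rabs_pos (s (u * 1))).
    pose proof (Rabs_pos (Rpower (u / w) sg * f (u / w) - C)).
    assert (Rpower u (- sg) * Rabs (Rpower (u / w) sg * f (u / w) - C) <= Rpower u (- sg) * eps) by nra.
    set (X := Rpower u (- sg) * Rabs (Rpower (u / w) sg * f (u / w) - C)) in *.
    assert (0 <= X) by (unfold X; nra).
    assert (X * Rabs (s (u * 1)) <= X) by nra. nra. }
  set (M1 := RInt m (a * w) A) in *. set (M2 := RInt m A (b * w)) in *.
  set (K1 := RInt k (a * w) A) in *. set (K2 := RInt k A (b * w)) in *.
  replace (M1 + M2 - C * (K1 + K2)) with ((M1 - C * K1) + M2 + (- C) * K2) by ring.
  pose proof (Rabs_triang (M1 - C * K1 + M2) (- C * K2)).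
  pose proof (Rabs_triang (M1 - C * K1) M2).
  rewrite Rabs_mult, Rabs_Ropp, (Rabs_pos_eq C) in H by auto.
  assert (C * Rabs K2 <= C * (2 * Rpower A (- sg) / 1)) by (apply Rmult_le_compat_l; auto).
  lra.
Qed.
End PartB2.

Section PartB3.
Variable f : R -> R.
Hypothesis Hinf : filterlim f (Rbar_locally p_infty) (locally 0).
Hypothesis HC2 : C2_pos f.
Hypothesis Hconv : convex_pos f.
Variable sg : R.
Hypothesis Hsg : 0 < sg < 1.

Lemma fixed_w_bound (s S : R -> R) (C eps eta w A Fw L : R) :
  (forall x, is_derive S x (s x)) -> (forall x, continuous s x) ->
  (forall x, Rabs (s x) <= 1) -> (forall x, Rabs (S x) <= 1) ->
  0 <= C -> 0 < w -> 0 < A -> A < eta * w ->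
  (forall t, 0 < t < eta -> Rabs (Rpower t sg * f t - C) <= eps) ->
  is_RInt_gen (fun t => f t * s (t * w)) (at_right 0) (Rbar_locally p_infty) Fw ->
  is_RInt_gen (fun u => Rpower u (- sg) * s (u * 1)) (at_right 0) (Rbar_locally p_infty) L ->
  Rabs (Rpower w (1 - sg) * Fw - C * L) <=
    eps * (Rpower A (1 - sg) / (1 - sg)) + 2 * (Rpower w (- sg) * f (A / w)) / 1
     + C * (2 * Rpower A (- sg) / 1).
Proof.
  intros HS Hs Hsb HSb HC Hw HA HAe Heps HF HL.
  set (Bnd := eps * (Rpower A (1 - sg) / (1 - sg)) + 2 * (Rpower w (- sg) * f (A / w)) / 1
     + C * (2 * Rpower A (- sg) / 1)).
  pose proof (rp_pos w (1 - sg)) as Hpw.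
  apply le_eps. intros e He.
  set (e' := e / (Rpower w (1 - sg) + C + 1)).
  assert (He' : 0 < e') by (unfold e'; apply Rdiv_lt_0_compat; lra).
  destruct (gen_to_eps _ _ HF e' He') as [d1 [Hd1 [M1 HM1]]].
  destruct (gen_to_eps _ _ HL e' He') as [d2 [Hd2 [M2 HM2]]].
  set (a := Rmin (Rmin d1 (d2 / w)) (A / w) / 2).
  assert (Hd2w : 0 < d2 / w) by (apply Rdiv_lt_0_compat; auto).
  assert (HAw : 0 < A / w) by (apply Rdiv_lt_0_compat; auto).
  pose proof (Rmin_l (Rmin d1 (d2 / w)) (A / w)). pose proof (Rmin_r (Rmin d1 (d2 / w)) (A / w)).
  pose proof (Rmin_l d1 (d2 / w)). pose proof (Rmin_r d1 (d2 / w)).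
  assert (Hm0 : 0 < Rmin (Rmin d1 (d2 / w)) (A / w)) by (apply Rmin_pos; [apply Rmin_pos|]; auto).
  assert (Ha : 0 < a) by (unfold a; lra).
  set (b := Rmax (Rmax M1 (M2 / w)) (A / w) + 1).
  pose proof (Rmax_l (Rmax M1 (M2 / w)) (A / w)). pose proof (Rmax_r (Rmax M1 (M2 / w)) (A / w)).
  pose proof (Rmax_l M1 (M2 / w)). pose proof (Rmax_r M1 (M2 / w)).
  assert (Hb1 : M1 < b) by (unfold b; lra).
  assert (Hb0 : 0 < b) by (unfold b; lra).
  assert (Hawd : a * w < d2).
  { apply (Rmult_lt_reg_r (/ w)). apply Rinv_0_lt_compat; auto.
    replace (a * w * / w) with a by (field; lra). unfold Rdiv in *. unfold a. lra. }
  assert (HawA : a * w < A).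
  { apply (Rmult_lt_reg_r (/ w)). apply Rinv_0_lt_compat; auto.
    replace (a * w * / w) with a by (field; lra). unfold Rdiv in *. unfold a. lra. }
  assert (HbwM : M2 < b * w).
  { apply (Rmult_lt_reg_r (/ w)). apply Rinv_0_lt_compat; auto.
    replace (b * w * / w) with b by (field; lra). unfold Rdiv in *. unfold b. lra. }
  assert (HbwA : A < b * w).
  { apply (Rmult_lt_reg_r (/ w)). apply Rinv_0_lt_compat; auto.
    replace (b * w * / w) with b by (field; lra). unfold Rdiv in *. unfold b. lra. }
  destruct (HM1 a b ltac:(unfold a; lra) Hb1) as [y1 [Iy1 Hy1]].
  destruct (HM2 (a * w) (b * w) ltac:(nra) HbwM) as [y2 [Iy2 Hy2]].
  apply RIntU in Iy1. apply RIntU in Iy2.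
  pose proof (finite_compare f Hinf HC2 Hconv sg Hsg s S C eps eta w A a b HS Hs Hsb HSb HC Hw Ha HawA HbwA HAe Heps) as FC.
  rewrite <- (change_var f HC2 sg s w a b Hs Hw Ha Hb0) in FC.
  rewrite Iy1, Iy2 in FC. fold Bnd in FC.
  replace (Rpower w (1 - sg) * Fw - C * L) with
    (Rpower w (1 - sg) * (Fw - y1) + (Rpower w (1 - sg) * y1 - C * y2) + C * (y2 - L)) by ring.
  pose proof (Rabs_triang (Rpower w (1 - sg) * (Fw - y1) + (Rpower w (1 - sg) * y1 - C * y2)) (C * (y2 - L))).
  pose proof (Rabs_triang (Rpower w (1 - sg) * (Fw - y1)) (Rpower w (1 - sg) * y1 - C * y2)).
  rewrite Rabs_mult, (Rabs_pos_eq (Rpower w (1 - sg))) in H8 by lra.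
  rewrite Rabs_mult, (Rabs_pos_eq C) in H7 by lra.
  rewrite <- Rabs_Ropp in Hy1. replace (- (y1 - Fw)) with (Fw - y1) in Hy1 by ring.
  assert (Rpower w (1 - sg) * Rabs (Fw - y1) <= Rpower w (1 - sg) * e') by (apply Rmult_le_compat_l; lra).
  assert (C * Rabs (y2 - L) <= C * e') by (apply Rmult_le_compat_l; lra).
  assert (E : Rpower w (1 - sg) * e' + C * e' <= e).
  { unfold e'. apply (Rmult_le_reg_r (Rpower w (1 - sg) + C + 1)). lra.
    field_simplify; lra. }
  lra.
Qed.

Lemma limit_compare (s S : R -> R) (C L : R) (F : R -> R) :
  (forall x, is_derive S x (s x)) -> (forall x, continuous s x) ->
  (forall x, Rabs (s x) <= 1) -> (forall x, Rabs (S x) <= 1) ->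
  0 < C ->
  filterlim (fun t => Rpower t sg * f t) (at_right 0) (locally C) ->
  (forall w, 0 < w -> is_RInt_gen (fun t => f t * s (t * w)) (at_right 0) (Rbar_locally p_infty) (F w)) ->
  is_RInt_gen (fun u => Rpower u (- sg) * s (u * 1)) (at_right 0) (Rbar_locally p_infty) L ->
  filterlim (fun w => Rpower w (1 - sg) * F w) (Rbar_locally p_infty) (locally (C * L)).
Proof.
  intros HS Hs Hsb HSb HC Hlim HF HL.
  apply eps_lim_inf. intros e0 He0.
  destruct (rp_big_small sg ltac:(lra) (e0 / (2 * (4 * C + 2)))) as [M HM].
  { apply Rdiv_lt_0_compat; lra. }
  set (A := Rmax M 1 + 1).
  assert (HA : 0 < A) by (unfold A; pose proof (Rmax_r M 1); lra).
  assert (HpA : Rpower A (- sg) < e0 / (2 * (4 * C + 2))) by (apply HM; unfold A; pose proof (Rmax_l M 1); lra).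
  set (PA := Rpower A (1 - sg) / (1 - sg)).
  assert (HPA : 0 < PA) by (unfold PA; apply Rdiv_lt_0_compat; [apply rp_pos | lra]).
  set (eps := Rmin 1 (e0 / (4 * (PA + 1)))).
  assert (Heps : 0 < eps) by (unfold eps; apply Rmin_pos; [lra | apply Rdiv_lt_0_compat; lra]).
  assert (Heps1 : eps <= 1) by apply Rmin_l.
  assert (Heps2 : eps * PA <= e0 / 4).
  { assert (eps <= e0 / (4 * (PA + 1))) by apply Rmin_r.
    apply Rle_trans with (e0 / (4 * (PA + 1)) * PA). apply Rmult_le_compat_r; lra.
    apply (Rmult_le_reg_r (4 * (PA + 1))). lra. field_simplify; nra. }
  destruct (lim_0_eps _ C Hlim eps Heps) as [eta [Heta Heta']].
  exists (A / eta). intros w Hw.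
  assert (Hw0 : 0 < w) by (pose proof (Rdiv_lt_0_compat A eta HA Heta); lra).
  assert (HAe : A < eta * w).
  { apply (Rmult_lt_reg_r (/ eta)). apply Rinv_0_lt_compat; auto.
    replace (eta * w * / eta) with w by (field; lra). exact Hw. }
  pose proof (fixed_w_bound s S C eps eta w A (F w) L HS Hs Hsb HSb ltac:(lra) Hw0 HA HAe
               ltac:(intros t Ht; apply Rlt_le; apply Heta'; auto) (HF w Hw0) HL) as B.
  assert (HAw : 0 < A / w < eta).
  { split. apply Rdiv_lt_0_compat; auto. apply (Rmult_lt_reg_r w); auto.
    replace (A / w * w) with A by (field; lra). lra. }
  specialize (Heta' _ HAw). apply Rabs_def2 in Heta'.
  assert (Phi : Rpower w (- sg) * f (A / w) <= Rpower A (- sg) * (C + 1)).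
  { rewrite <- (rp_ratio A w sg) by auto. pose proof (rp_pos A (- sg)).
    rewrite Rmult_assoc. apply Rmult_le_compat_l; lra. }
  fold PA in B.
  pose proof (rp_pos A (- sg)).
  assert (Rpower A (- sg) * (4 * C + 2) < e0 / 2).
  { apply (Rmult_lt_compat_r (4 * C + 2)) in HpA; [|lra].
    replace (e0 / (2 * (4 * C + 2)) * (4 * C + 2)) with (e0 / 2) in HpA by (field; lra). exact HpA. }
  assert (Hfin : Rabs (Rpower w (1 - sg) * F w - C * L) < e0).
  { eapply Rle_lt_trans. exact B. nra. }
  exact Hfin.
Qed.
End PartB3.

Lemma sin_le_x a : 0 < a -> sin a <= a.
Proof.
  intro Ha. destruct (MVT_cor2 sin cos 0 a Ha) as [c [E Hc]].
  intros c Hc. apply derivable_pt_lim_sin.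
  rewrite sin_0 in E. pose proof (COS_bound c). nra.
Qed.

Lemma PI_gt3 : 3 < PI.
Proof. pose proof PI2_3_2. lra. Qed.

Lemma cont_sin1 x : continuous (fun u => sin (u * 1)) x.
Proof. apply cont_w. intro y. apply (contD sin y (cos y)). apply is_derive_Reals, derivable_pt_lim_sin. Qed.

Lemma sinpos (g dg : R -> R) (a b : R) :
  amp g dg -> 0 < a < 1 -> PI < b ->
  (g (3/2) - g PI) * sin 1 / 2 + g PI * (cos a - 1) <= RInt (fun u => g u * sin (u * 1)) a b.
Proof.
  intros Ha Hab Hb.
  pose proof PI_gt3 as HPI.
  pose proof osc_sin as [S1 [S2 [S3 [S4 [S5 S6]]]]].
  assert (Hgc : forall t, 0 < t -> continuous g t) by (apply amp_cont with dg; auto).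
  assert (Ex : forall x y, 0 < x -> 0 < y -> ex_RInt (fun u => g u * sin (u * 1)) x y).
  { intros x y Hx Hy. apply exR. intros z Hz.
    assert (0 < z) by (pose proof (Rmin_glb_lt x y 0 Hx Hy); lra).
    apply cmul. apply Hgc; auto. apply cont_sin1. }
  rewrite <- (RInt_Chasles _ a PI b) by (apply Ex; lra). change (plus ?x ?y) with (x + y).
  destruct (tail_bound g dg sin (fun x => - cos x) 1 PI b Ha S1 S3 S5 ltac:(lra) ltac:(lra)) as [_ T].
  apply Rabs_le_between in T.
  set (gp := g PI).
  assert (Hsin_ex : forall x y, ex_RInt (fun u => sin (u * 1)) x y).
  { intros x y. apply exR. intros; apply cont_sin1. }
  assert (Eh : forall x y, 0 < x -> 0 < y -> ex_RInt (fun u => (g u - gp) * sin (u * 1)) x y).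
  { intros x y Hx Hy. apply exR. intros z Hz.
    assert (0 < z) by (pose proof (Rmin_glb_lt x y 0 Hx Hy); lra).
    apply cmul. apply (cplus g (fun _ => - gp)). apply Hgc; auto. apply continuous_const. apply cont_sin1. }
  assert (D1 : RInt (fun u => g u * sin (u * 1)) a PI =
               RInt (fun u => (g u - gp) * sin (u * 1)) a PI + gp * RInt (fun u => sin (u * 1)) a PI).
  { rewrite <- RIntS by auto. rewrite <- RIntP. apply RInt_ext. intros x _.
    change (g x * sin (x * 1) = (g x - gp) * sin (x * 1) + gp * sin (x * 1)). ring.
    apply Eh; lra. apply exS; auto. }
  assert (D2 : RInt (fun u => sin (u * 1)) a PI = cos a + 1).
  { rewrite (RIntU _ _ _ (- cos PI - - cos a)). change (- cos PI - - cos a = cos a + 1). rewrite cos_PI. ring.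
    apply (IRD (fun u => - cos u)). intros x _.
    apply (is_derive_ext (fun u => - cos u)). intros; reflexivity.
    rewrite Rmult_1_r. apply S1. intros; apply cont_sin1. }
  assert (Hdec : forall x y, 0 < x -> x <= y -> g y <= g x) by (apply amp_decr with dg; auto).
  assert (Hnn : forall x y, 0 < x -> x <= y -> y <= PI -> 0 <= RInt (fun u => (g u - gp) * sin (u * 1)) x y).
  { intros x y Hx Hxy HyP.
    assert (Z : RInt (fun _ : R => 0) x y = 0).
    { rewrite (RInt_const (V:=R_CompleteNormedModule)). apply Rmult_0_r. }
    rewrite <- Z. apply RInt_le; auto. apply exR; intros; apply continuous_const. apply Eh; lra.
    intros t Ht. apply Rmult_le_pos. pose proof (Hdec t PI ltac:(lra) ltac:(lra)). unfold gp; lra.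
    rewrite Rmult_1_r. apply sin_ge_0; lra. }
  assert (Hmid : (g (3/2) - gp) * sin 1 / 2 <= RInt (fun u => (g u - gp) * sin (u * 1)) 1 (3/2)).
  { replace ((g (3/2) - gp) * sin 1 / 2) with (RInt (fun _ => (g (3/2) - gp) * sin 1) 1 (3/2)).
    2:{ rewrite (RInt_const (V:=R_CompleteNormedModule)).
        change ((3 / 2 - 1) * ((g (3 / 2) - gp) * sin 1) = (g (3 / 2) - gp) * sin 1 / 2). field. }
    apply RInt_le. lra. apply exR; intros; apply continuous_const. apply Eh; lra.
    intros t Ht. rewrite Rmult_1_r.
    assert (g (3/2) - gp <= g t - gp) by (pose proof (Hdec t (3/2) ltac:(lra) ltac:(lra)); lra).
    assert (0 <= g (3/2) - gp) by (pose proof (Hdec (3/2) PI ltac:(lra) ltac:(lra)); unfold gp; lra).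
    assert (sin 1 <= sin t).
    { pose proof PI2_3_2. apply sin_incr_1; lra. }
    assert (0 <= sin 1) by (apply sin_ge_0; lra).
    nra. }
  rewrite <- (RInt_Chasles (V:=R_CompleteNormedModule) (fun u => (g u - gp) * sin (u * 1)) a 1 PI) in D1 by (apply Eh; lra).
  rewrite <- (RInt_Chasles (V:=R_CompleteNormedModule) (fun u => (g u - gp) * sin (u * 1)) 1 (3/2) PI) in D1 by (apply Eh; lra).
  change (plus ?x ?y) with (x + y) in D1. change (plus ?x ?y) with (x + y) in D1.
  pose proof (Hnn a 1 ltac:(lra) ltac:(lra) ltac:(lra)).
  pose proof (Hnn (3/2) PI ltac:(lra) ltac:(lra) ltac:(lra)).
  assert (0 <= gp) by (destruct Ha as [_ [_ [_ [A4 _]]]]; apply A4; lra).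
  rewrite D2 in D1. 
  assert (-(2 * gp / 1) <= RInt (fun u => g u * sin (u * 1)) PI b) by (unfold gp; lra).
  replace (2 * gp / 1) with (2 * gp) in H2 by field.
  fold gp. nra.
Qed.

Lemma rp_strict c x y : 0 < c -> 0 < x < y -> Rpower y (- c) < Rpower x (- c).
Proof.
  intros Hc Hxy. rewrite !Rpower_Ropp. apply Rinv_lt_contravar.
  apply Rmult_lt_0_compat; apply rp_pos. apply Rlt_Rpower_l; auto.
Qed.

Lemma cos_near0 e : 0 < e -> exists r, 0 < r /\ forall a, 0 < a < r -> 1 - e < cos a.
Proof.
  intros He.
  destruct (cont_eps cos 0 (contD cos 0 (- sin 0) (proj2 (is_derive_Reals _ _ _) (derivable_pt_lim_cos 0))) e He) as [r [Hr Hr']].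
  exists r. split; auto. intros a Ha. specialize (Hr' a). rewrite Rminus_0_r, Rabs_pos_eq, cos_0 in Hr' by lra.
  specialize (Hr' ltac:(lra)). apply Rabs_def2 in Hr'. lra.
Qed.

Lemma sinpos_ev (g dg : R -> R) :
  amp g dg -> g PI < g (3/2) ->
  exists d, 0 < d /\ exists M, forall a b, 0 < a < d -> M < b ->
    (g (3/2) - g PI) * sin 1 / 4 <= RInt (fun u => g u * sin (u * 1)) a b.
Proof.
  intros Ha Hg.
  pose proof PI_gt3.
  assert (Hs1 : 0 < sin 1) by (apply sin_gt_0; lra).
  set (dl := (g (3/2) - g PI) * sin 1 / 2).
  assert (Hdl : 0 < dl) by (unfold dl; nra).
  assert (Hgp : 0 <= g PI) by (destruct Ha as [_ [_ [_ [A4 _]]]]; apply A4; lra).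
  destruct (cos_near0 (dl / (2 * (g PI + 1)))) as [r [Hr Hr']]. apply Rdiv_lt_0_compat; lra.
  exists (Rmin 1 r). split. apply Rmin_pos; lra.
  exists PI. intros a b Hab Hb. pose proof (Rmin_l 1 r). pose proof (Rmin_r 1 r).
  pose proof (sinpos g dg a b Ha ltac:(lra) Hb) as S.
  specialize (Hr' a ltac:(lra)).
  assert (g PI * (1 - cos a) <= g PI * (dl / (2 * (g PI + 1)))) by (apply Rmult_le_compat_l; lra).
  assert (g PI * (dl / (2 * (g PI + 1))) <= dl / 2).
  { apply (Rmult_le_reg_r (2 * (g PI + 1))). lra.
    replace (g PI * (dl / (2 * (g PI + 1))) * (2 * (g PI + 1))) with (g PI * dl) by (field; lra). nra. }
  fold dl in S. unfold dl in *. lra.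
Qed.

Lemma Ps_pos sg L : 0 < sg < 1 ->
  is_RInt_gen (fun u => Rpower u (- sg) * sin (u * 1)) (at_right 0) (Rbar_locally p_infty) L -> 0 < L.
Proof.
  intros Hs HL. pose proof PI_gt3. pose proof (sin_gt_0 1 ltac:(lra) ltac:(lra)).
  assert (Hg : Rpower PI (- sg) < Rpower (3/2) (- sg)) by (apply rp_strict; lra).
  pose proof (gen_bound_ge _ L _ HL (sinpos_ev _ _ (amp_p sg ltac:(lra)) Hg)).
  nra.
Qed.

Lemma Pc_pos sg L : 0 < sg < 1 ->
  is_RInt_gen (fun u => Rpower u (- sg) * cos (u * 1)) (at_right 0) (Rbar_locally p_infty) L -> 0 < L.
Proof.
  intros Hs HL. pose proof PI_gt3. pose proof (sin_gt_0 1 ltac:(lra) ltac:(lra)).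
  set (q := fun u => Rpower u (- (sg + 1))).
  assert (Aq : amp q (fun u => - (sg + 1) * Rpower u (- (sg + 1) - 1))) by (apply amp_p; lra).
  assert (Hg : q PI < q (3/2)) by (apply rp_strict; lra).
  set (dq := (q (3/2) - q PI) * sin 1 / 4).
  assert (Hdq : 0 < dq) by (unfold dq; nra).
  destruct (sinpos_ev _ _ Aq Hg) as [d1 [Hd1 [M1 HM1]]]. fold dq in HM1.
  destruct (rp_small (1 - sg) ltac:(lra) (sg * dq / 4)) as [d2 [Hd2 Hd2']]. nra.
  destruct (rp_big_small sg ltac:(lra) (sg * dq / 4)) as [M2 HM2]. nra.
  apply Rlt_le_trans with (sg * dq / 2). nra.
  apply (gen_bound_ge _ L _ HL).
  exists (Rmin d1 (Rmin d2 1)). split. apply Rmin_pos; auto. apply Rmin_pos; lra.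
  exists (Rmax (Rmax M1 M2) 1). intros a b Ha Hb.
  pose proof (Rmin_l d1 (Rmin d2 1)). pose proof (Rmin_r d1 (Rmin d2 1)).
  pose proof (Rmin_l d2 1). pose proof (Rmin_r d2 1).
  pose proof (Rmax_l (Rmax M1 M2) 1). pose proof (Rmax_r (Rmax M1 M2) 1).
  pose proof (Rmax_l M1 M2). pose proof (Rmax_r M1 M2).
  specialize (HM1 a b ltac:(lra) ltac:(lra)).
  specialize (Hd2' a ltac:(lra)). specialize (HM2 b ltac:(lra)).
  assert (Ex : forall (h : R -> R), (forall t, 0 < t -> continuous h t) -> ex_RInt h a b).
  { intros h Hh. apply exR. intros z Hz. apply Hh. pose proof (Rmin_glb_lt a b 0 ltac:(lra) ltac:(lra)). lra. }
  assert (Hcs : forall x, continuous (fun u => cos (u * 1)) x).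
  { intro x. apply cont_w. intro y. apply (contD cos y (- sin y)). apply is_derive_Reals, derivable_pt_lim_cos. }
  assert (I : is_RInt (fun u => - sg * q u * sin (u * 1) + Rpower u (- sg) * cos (u * 1)) a b
                (Rpower b (- sg) * sin (b * 1) - Rpower a (- sg) * sin (a * 1))).
  { apply (IRD (fun u => Rpower u (- sg) * sin (u * 1))).
    - intros x Hx. rewrite Rmin_left, Rmax_right in Hx by lra.
      apply (is_derive_ext (fun u => Rpower u (- sg) * sin u)). intros; rewrite Rmult_1_r; reflexivity.
      rewrite Rmult_1_r. unfold q. replace (- (sg + 1)) with (- sg - 1) by ring.
      replace (- sg * Rpower x (- sg - 1) * sin x) with (mult (- sg * Rpower x (- sg - 1)) (sin x)) by reflexivity.
      apply (is_derive_mult (fun u => Rpower u (- sg)) sin). apply rp_deriv; lra.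
      apply is_derive_Reals, derivable_pt_lim_sin. intros; apply Rmult_comm.
    - intros x Hx. rewrite Rmin_left, Rmax_right in Hx by lra.
      apply cplus. apply cmul. apply (cmul (fun _ => - sg) q). apply continuous_const.
      unfold q. apply rp_cont; lra. apply cont_sin1. apply cmul. apply rp_cont; lra. apply Hcs. }
  apply RIntU in I.
  rewrite RIntP in I.
  2:{ apply Ex. intros t Ht. apply cmul. apply (cmul (fun _ => - sg) q). apply continuous_const.
      unfold q. apply rp_cont; lra. apply cont_sin1. }
  2:{ apply Ex. intros t Ht. apply cmul. apply rp_cont; lra. apply Hcs. }
  rewrite (RInt_ext (fun u => - sg * q u * sin (u * 1)) (fun u => - sg * (q u * sin (u * 1)))) in I.
  2:{ intros; change (- sg * q x * sin (x * 1) = - sg * (q x * sin (x * 1))). ring. }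
  rewrite RIntS in I.
  2:{ apply Ex. intros t Ht. apply cmul. unfold q. apply rp_cont; lra. apply cont_sin1. }
  change (- sg * RInt (fun u => q u * sin (u * 1)) a b + RInt (fun u => Rpower u (- sg) * cos (u * 1)) a b =
          Rpower b (- sg) * sin (b * 1) - Rpower a (- sg) * sin (a * 1)) in I.
  rewrite !Rmult_1_r in I.
  assert (Hsa : Rpower a (- sg) * sin a <= Rpower a (1 - sg)).
  { replace (Rpower a (1 - sg)) with (Rpower a (- sg) * a).
    apply Rmult_le_compat_l. apply Rlt_le, rp_pos. apply sin_le_x; lra.
    rewrite <- (Rpower_1 a) at 2 by lra. rewrite rp_mul. f_equal; ring. }
  assert (Hsb : Rpower b (- sg) * sin b >= - Rpower b (- sg)).
  { pose proof (SIN_bound b). pose proof (rp_pos b (- sg)). nra. }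
  assert (sg * dq <= sg * RInt (fun u => q u * sin (u * 1)) a b) by (apply Rmult_le_compat_l; lra).
  lra.
Qed.

Lemma partB_result (f : R -> R) :
  filterlim f (Rbar_locally p_infty) (locally 0) -> C2_pos f -> convex_pos f ->
    forall s2, 0 < s2 < 1 ->
    (exists C, 0 < C /\
       filterlim (fun t => Rpower t s2 * f t) (at_right 0) (locally C)) ->
    exists Fc Fs : R -> R,
      (forall w, 0 < w -> is_Fcos f w (Fc w)) /\
      (forall w, 0 < w -> is_Fsin f w (Fs w)) /\
      (exists Lc, 0 < Lc /\
         filterlim (fun w => Rpower w (1 - s2) * Fc w) (Rbar_locally p_infty) (locally Lc)) /\
      (exists Ls, 0 < Ls /\
         filterlim (fun w => Rpower w (1 - s2) * Fs w) (Rbar_locally p_infty) (locally Ls)).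
Proof.
  intros Hinf HC2 Hconv s2 Hs2 [C [HC Hlim]].
  destruct (lim_0_eps _ C Hlim 1 ltac:(lra)) as [d0 [Hd0 Hd0']].
  assert (Hbd : forall t, 0 < t < d0 -> f t <= (C + 1) * Rpower t (- s2)).
  { intros t Ht. specialize (Hd0' t Ht). apply Rabs_def2 in Hd0'.
    assert (E : Rpower t (- s2) * Rpower t s2 = 1).
    { rewrite rp_mul. replace (- s2 + s2) with 0 by ring. apply Rpower_O; lra. }
    replace (f t) with (Rpower t (- s2) * (Rpower t s2 * f t)) by (rewrite <- Rmult_assoc, E; ring).
    pose proof (rp_pos t (- s2)). nra. }
  pose proof osc_cos as [Cs1 [Cs2 [Cs3 [Cs4 [Cs5 Cs6]]]]].
  pose proof osc_sin as [Sn1 [Sn2 [Sn3 [Sn4 [Sn5 Sn6]]]]].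
  set (Fc := fun w => RInt_gen (fun t => f t * cos (t * w)) (at_right 0) (Rbar_locally p_infty)).
  set (Fs := fun w => RInt_gen (fun t => f t * sin (t * w)) (at_right 0) (Rbar_locally p_infty)).
  assert (HFc : forall w, 0 < w -> is_Fcos f w (Fc w)).
  { intros w Hw. unfold is_Fcos, is_Fsin, Fc, Fs. apply gen_correct.
    exact (exist_osc f (Derive f) cos sin s2 (C + 1) d0 (amp_f f Hinf HC2 Hconv) Cs1 Cs3 Cs4 Cs5 Hs2 Hd0 Hbd w Hw). }
  assert (HFs : forall w, 0 < w -> is_Fsin f w (Fs w)).
  { intros w Hw. unfold is_Fcos, is_Fsin, Fc, Fs. apply gen_correct.
    exact (exist_osc f (Derive f) sin (fun x => - cos x) s2 (C + 1) d0 (amp_f f Hinf HC2 Hconv) Sn1 Sn3 Sn4 Sn5 Hs2 Hd0 Hbd w Hw). }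
  assert (Ap := amp_p s2 ltac:(lra)).
  assert (Pbd : forall t, 0 < t < 1 -> Rpower t (- s2) <= 1 * Rpower t (- s2)) by (intros; lra).
  set (Pc := RInt_gen (fun u => Rpower u (- s2) * cos (u * 1)) (at_right 0) (Rbar_locally p_infty)).
  set (Ps := RInt_gen (fun u => Rpower u (- s2) * sin (u * 1)) (at_right 0) (Rbar_locally p_infty)).
  assert (HPc : is_RInt_gen (fun u => Rpower u (- s2) * cos (u * 1)) (at_right 0) (Rbar_locally p_infty) Pc).
  { apply gen_correct. exact (exist_osc _ _ cos sin s2 1 1 Ap Cs1 Cs3 Cs4 Cs5 Hs2 ltac:(lra) Pbd 1 ltac:(lra)). }
  assert (HPs : is_RInt_gen (fun u => Rpower u (- s2) * sin (u * 1)) (at_right 0) (Rbar_locally p_infty) Ps).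
  { apply gen_correct. exact (exist_osc _ _ sin (fun x => - cos x) s2 1 1 Ap Sn1 Sn3 Sn4 Sn5 Hs2 ltac:(lra) Pbd 1 ltac:(lra)). }
  exists Fc, Fs. split; auto. split; auto. split.
  - exists (C * Pc). split. apply Rmult_lt_0_compat; auto. exact (Pc_pos s2 Pc Hs2 HPc).
    exact (limit_compare f Hinf HC2 Hconv s2 Hs2 cos sin C Pc Fc Cs1 Cs3 Cs4 Cs5 HC Hlim HFc HPc).
  - exists (C * Ps). split. apply Rmult_lt_0_compat; auto. exact (Ps_pos s2 Ps Hs2 HPs).
    exact (limit_compare f Hinf HC2 Hconv s2 Hs2 sin (fun x => - cos x) C Ps Fs Sn1 Sn3 Sn4 Sn5 HC Hlim HFs HPs).
Qed.

Theorem proposition3p3 (f : R -> R) :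
  filterlim f (Rbar_locally p_infty) (locally 0) ->
  eventually_decreasing f ->
  C2_pos f ->
  convex_pos f ->
  (exists eps, 0 < eps /\ monotone_on_0 (Derive (Derive f)) eps) ->
  ((filterlim f (at_right 0) (locally (f 0)) ->
    forall s1, 0 < s1 < 1 ->
    filterlim (fun t => Rpower t s1 * Derive f t) (at_right 0) (locally 0) ->
    exists Fc Fs : R -> R,
      (forall w, 0 < w -> is_Fcos f w (Fc w)) /\
      (forall w, 0 < w -> is_Fsin f w (Fs w)) /\
      filterlim (fun w => Rpower w (2 - s1) * Fc w) (Rbar_locally p_infty) (locally 0) /\
      filterlim (fun w => w * Fs w) (Rbar_locally p_infty) (locally (f 0)))
  /\
   (filterlim f (at_right 0) (Rbar_locally p_infty) ->
    forall s2, 0 < s2 < 1 ->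
    (exists C, 0 < C /\
       filterlim (fun t => Rpower t s2 * f t) (at_right 0) (locally C)) ->
    exists Fc Fs : R -> R,
      (forall w, 0 < w -> is_Fcos f w (Fc w)) /\
      (forall w, 0 < w -> is_Fsin f w (Fs w)) /\
      (exists Lc, 0 < Lc /\
         filterlim (fun w => Rpower w (1 - s2) * Fc w) (Rbar_locally p_infty) (locally Lc)) /\
      (exists Ls, 0 < Ls /\
         filterlim (fun w => Rpower w (1 - s2) * Fs w) (Rbar_locally p_infty) (locally Ls)))).
Proof.
  intros Hinf _ HC2 Hconv _. split.
  - intros H0. exact (partA_result f Hinf HC2 Hconv H0).
  - intros _. exact (partB_result f Hinf HC2 Hconv).
Qed.
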